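(* Every ordinal space is homeomorphic to one of the following ordinal spaces: (1) $\emptyset$ or $k$; (2) $\omega^\alpha\cdot k+1$; (3) $\omega^\alpha\cdot k$; (4) $\omega^\alpha\cdot k+\omega^\beta$; where $k$ is a nonzero natural number, $\alpha$ is a nonzero ordinal and, in case (4), $\beta$ is a nonzero ordinal with $\beta<\alpha$. Moreover, this list has no redundancy: no space in one of these four families is homeomorphic to a space in another family, and within each family, distinct parameter values ($k$, $\alpha$, $\beta$) give non-homeomorphic spaces.
   Context: An ordinal space is an ordinal $\gamma=\{\delta:\delta<\gamma\}$ endowed with its order topology. Ordinal arithmetic (addition, multiplication, exponentiation) is the standard one, continuous in the right argument. *)

(* Defs.v *)
(* Ordinals are represented as well-ordered types
   (ordinals up to order isomorphism); the ordinal space of an ordinal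
   is its order topology. *)
From Stdlib Require Import List Arith.

Record LO := mkLO { car :> Type; lt : car -> car -> Prop }.
Arguments lt {l} _ _.

Definition is_ordinal (L : LO) : Prop :=
  (forall x : L, ~ lt x x) /\
  (forall x y z : L, lt x y -> lt y z -> lt x z) /\
  (forall x y : L, lt x y \/ x = y \/ lt y x) /\
  well_founded (@lt L).

Definition ord_iso (X Y : LO) : Prop :=
  exists (f : X -> Y) (g : Y -> X),
    (forall x, g (f x) = x) /\ (forall y, f (g y) = y) /\
    (forall x x' : X, lt x x' <-> lt (f x) (f x')).

Definition segment (X : LO) (a : X) : LO :=
  @mkLO {x : X | lt x a} (fun x y => lt (proj1_sig x) (proj1_sig y)).

Definition ord_lt (B A : LO) : Prop := exists a : A, ord_iso B (segment A a).

Definition nonzero (A : LO) : Prop := inhabited (car A).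

Definition fin (n : nat) : LO :=
  @mkLO {i : nat | i < n} (fun i j => proj1_sig i < proj1_sig j).

(* omega ^ alpha : finitely supported functions alpha -> omega, ordered by
   the value at the largest point where they differ *)
Definition opow_car (A : LO) : Type :=
  {f : A -> nat | exists l : list A, forall x, f x <> 0 -> In x l}.

Definition omega_pow (A : LO) : LO :=
  @mkLO (opow_car A)
    (fun f g => exists x : A, proj1_sig f x < proj1_sig g x /\
        forall y : A, lt x y -> proj1_sig f y = proj1_sig g y).

Definition mul_nat (L : LO) (k : nat) : LO :=
  @mkLO (fin k * L)%type
    (fun p q => proj1_sig (fst p) < proj1_sig (fst q) \/
                (proj1_sig (fst p) = proj1_sig (fst q) /\ lt (snd p) (snd q))).

Definition succ (L : LO) : LO :=
  @mkLO (option L)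
    (fun p q => match p, q with
                | Some x, Some y => lt x y
                | Some _, None => True
                | _, _ => False end).

Definition osum (L M : LO) : LO :=
  @mkLO (L + M)%type
    (fun p q => match p, q with
                | inl x, inl y => lt x y
                | inr x, inr y => lt x y
                | inl _, inr _ => True
                | inr _, inl _ => False end).

Definition in_interval (X : LO) (lo hi : option X) (y : X) : Prop :=
  match lo with None => True | Some a => lt a y end /\
  match hi with None => True | Some b => lt y b end.

Definition ord_open (X : LO) (U : X -> Prop) : Prop :=
  forall x, U x -> exists lo hi : option X,
    in_interval X lo hi x /\ forall y, in_interval X lo hi y -> U y.

Definition ord_continuous (X Y : LO) (f : X -> Y) : Prop :=
  forall V : Y -> Prop, ord_open Y V -> ord_open X (fun x => V (f x)).

Definition homeomorphic (X Y : LO) : Prop :=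
  exists (f : X -> Y) (g : Y -> X),
    (forall x, g (f x) = x) /\ (forall y, f (g y) = y) /\
    ord_continuous X Y f /\ ord_continuous Y X g.

Inductive code : Type :=
  | Fam1 (n : nat)
  | Fam2 (k : nat) (A : LO)
  | Fam3 (k : nat) (A : LO)
  | Fam4 (k : nat) (A B : LO).

Definition valid (c : code) : Prop :=
  match c with
  | Fam1 _ => True
  | Fam2 k A | Fam3 k A => 0 < k /\ is_ordinal A /\ nonzero A
  | Fam4 k A B => 0 < k /\ is_ordinal A /\ nonzero A /\
                  is_ordinal B /\ nonzero B /\ ord_lt B A
  end.

Definition space (c : code) : LO :=
  match c with
  | Fam1 n => fin n
  | Fam2 k A => succ (mul_nat (omega_pow A) k)
  | Fam3 k A => mul_nat (omega_pow A) k
  | Fam4 k A B => osum (mul_nat (omega_pow A) k) (omega_pow B)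
  end.

Definition same_params (c d : code) : Prop :=
  match c, d with
  | Fam1 n, Fam1 m => n = m
  | Fam2 k A, Fam2 k' A' => k = k' /\ ord_iso A A'
  | Fam3 k A, Fam3 k' A' => k = k' /\ ord_iso A A'
  | Fam4 k A B, Fam4 k' A' B' => k = k' /\ ord_iso A A' /\ ord_iso B B'
  | _, _ => False
  end.

(* Main.v *)
Require Import Defs.
From Stdlib Require Import List Arith Lia Classical ClassicalEpsilon FunctionalExtensionality ProofIrrelevance Wellfounded FinFun.
Import ListNotations.

Set Implicit Arguments.

Definition le {X : LO} (x y : X) : Prop := lt x y \/ x = y.

Section WO.
Variable X : LO.
Hypothesis HX : is_ordinal X.

Lemma o_irr (x : X) : ~ lt x x.
Proof. destruct HX as [H _]; auto. Qed.
Lemma o_trans {x y z : X} : lt x y -> lt y z -> lt x z.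
Proof. destruct HX as [_ [H _]]; eauto. Qed.
Lemma o_trich (x y : X) : lt x y \/ x = y \/ lt y x.
Proof. destruct HX as [_ [_ [H _]]]; auto. Qed.
Lemma o_wf : well_founded (@lt X).
Proof. destruct HX as [_ [_ [_ H]]]; auto. Qed.

Lemma o_asym {x y : X} : lt x y -> ~ lt y x.
Proof. intros H1 H2. apply (o_irr x). eapply o_trans; eauto. Qed.

Lemma o_nlt_le {x y : X} : ~ lt x y -> le y x.
Proof. intros H. destruct (o_trich x y) as [h|[h|h]]; unfold le; auto. tauto. Qed.

Lemma o_le_nlt {x y : X} : le y x -> ~ lt x y.
Proof. intros [h|h] h2. - apply (o_asym h h2). - subst. apply (o_irr _ h2). Qed.

Lemma o_le_trans {x y z : X} : le x y -> le y z -> le x z.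
Proof. unfold le; intros [h|h] [h'|h']; subst; eauto using o_trans. Qed.

Lemma o_lt_le_trans {x y z : X} : lt x y -> le y z -> lt x z.
Proof. intros h [h'|h']; subst; eauto using o_trans. Qed.

Lemma o_le_lt_trans {x y z : X} : le x y -> lt y z -> lt x z.
Proof. intros [h|h] h'; subst; eauto using o_trans. Qed.

Lemma o_min (P : X -> Prop) : (exists x, P x) -> exists m, P m /\ forall y, P y -> ~ lt y m.
Proof.
  intros [x Hx]. apply NNPP; intro Hn.
  assert (forall z, ~ P z).
  { intro z. induction z as [z IH] using (well_founded_ind o_wf).
    intro Pz. apply Hn. exists z. split; auto. intros y Py Hy. exact (IH y Hy Py). }
  exact (H x Hx).
Qed.

Lemma o_max_list (P : X -> Prop) (l : list X) :
  (forall x, P x -> In x l) -> (exists x, P x) -> exists m, P m /\ forall y, P y -> le y m.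
Proof.
  revert P; induction l as [|a l IH]; intros P Hl [x Hx].
  - destruct (Hl x Hx).
  - destruct (classic (exists y, P y /\ y <> a)) as [[y [Py Hya]]|Hn].
    + destruct (IH (fun z => P z /\ z <> a)) as [m [[Pm Hma] Hm]].
      { intros z [Pz Hz]. destruct (Hl z Pz); auto. congruence. }
      { eauto. }
      destruct (classic (P a)) as [Pa|nPa].
      * destruct (o_trich m a) as [h|[h|h]].
        -- exists a. split; auto. intros z Pz. destruct (classic (z = a)) as [->|hz].
           ++ right; auto.
           ++ left. apply (o_le_lt_trans (Hm z (conj Pz hz)) h).
        -- congruence.
        -- exists m. split; auto. intros z Pz. destruct (classic (z = a)) as [->|hz].
           ++ left; auto.
           ++ apply Hm; auto.
      * exists m. split; auto. intros z Pz. apply Hm. split; auto. intro; subst; auto.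
    + exists a. assert (Pa : P a).
      { destruct (classic (x = a)) as [<-|h]; auto. exfalso; eauto. }
      split; auto. intros z Pz. right. apply NNPP; intro h. eauto.
Qed.

End WO.

Arguments o_irr {X} HX x.
Arguments o_trans {X} HX {x y z}.
Arguments o_trich {X} HX x y.
Arguments o_asym {X} HX {x y}.
Arguments o_nlt_le {X} HX {x y}.
Arguments o_le_nlt {X} HX {x y}.
Arguments o_le_trans {X} HX {x y z}.
Arguments o_lt_le_trans {X} HX {x y z}.
Arguments o_le_lt_trans {X} HX {x y z}.
Arguments o_min {X} HX P.
Arguments o_max_list {X} HX P l.
Arguments o_wf {X} HX.

Lemma iso_refl (X : LO) : ord_iso X X.
Proof. exists (fun x => x), (fun x => x). repeat split; auto. Qed.

Lemma iso_sym (X Y : LO) : ord_iso X Y -> ord_iso Y X.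
Proof.
  intros [f [g [H1 [H2 H3]]]]. exists g, f. repeat split; auto.
  - intros h. apply H3. rewrite !H2. auto.
  - intros h. apply H3 in h. rewrite !H2 in h. auto.
Qed.

Lemma iso_trans (X Y Z : LO) : ord_iso X Y -> ord_iso Y Z -> ord_iso X Z.
Proof.
  intros [f [g [H1 [H2 H3]]]] [f' [g' [H1' [H2' H3']]]].
  exists (fun x => f' (f x)), (fun z => g (g' z)). repeat split.
  - intros x. rewrite H1', H1. auto.
  - intros z. rewrite H2, H2'. auto.
  - intros h. apply H3', H3, h.
  - intros h. apply H3, H3', h.
Qed.

Definition smono {X Y : LO} (f : X -> Y) := forall x y, lt x y -> lt (f x) (f y).

Lemma smono_refl {X Y : LO} (HX : is_ordinal X) (HY : is_ordinal Y) (f : X -> Y) :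
  smono f -> forall x y, lt (f x) (f y) -> lt x y.
Proof.
  intros Hf x y h. destruct (o_trich HX x y) as [h'|[h'|h']]; auto.
  - subst. destruct (o_irr HY _ h).
  - destruct (o_asym HY h (Hf _ _ h')).
Qed.

Lemma smono_inj {X Y : LO} (HX : is_ordinal X) (HY : is_ordinal Y) (f : X -> Y) :
  smono f -> forall x y, f x = f y -> x = y.
Proof.
  intros Hf x y h. destruct (o_trich HX x y) as [h'|[h'|h']]; auto.
  - apply Hf in h'. rewrite h in h'. destruct (o_irr HY _ h').
  - apply Hf in h'. rewrite h in h'. destruct (o_irr HY _ h').
Qed.

Lemma iso_of_surj {X Y : LO} (HX : is_ordinal X) (HY : is_ordinal Y) (f : X -> Y) :
  smono f -> (forall y, exists x, f x = y) -> ord_iso X Y.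
Proof.
  intros Hf Hs.
  set (g := fun y => proj1_sig (constructive_indefinite_description _ (Hs y))).
  assert (Hg : forall y, f (g y) = y).
  { intro y. unfold g. destruct (constructive_indefinite_description _ (Hs y)); auto. }
  exists f, g. repeat split; auto.
  - intro x. apply (smono_inj HX HY Hf). auto.
  - apply (smono_refl HX HY Hf).
Qed.

Lemma smono_ge {X : LO} (HX : is_ordinal X) (k : X -> X) : smono k -> forall x, ~ lt (k x) x.
Proof.
  intros Hk x. induction x as [x IH] using (well_founded_ind (o_wf HX)).
  intro h. apply (IH (k x) h). apply Hk; auto.
Qed.

Lemma sig_eq {A : Type} {P : A -> Prop} (a b : sig P) : proj1_sig a = proj1_sig b -> a = b.
Proof. destruct a as [a pa], b as [b pb]; simpl; intros ->. f_equal. apply proof_irrelevance. Qed.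

Definition sub (X : LO) (P : X -> Prop) : LO :=
  @mkLO {x : X | P x} (fun x y => lt (proj1_sig x) (proj1_sig y)).

Lemma sub_ord (X : LO) (P : X -> Prop) : is_ordinal X -> is_ordinal (sub X P).
Proof.
  intros HX. split; [|split; [|split]].
  - intros [x px]; simpl. apply (o_irr HX).
  - intros [x px] [y py] [z pz]; simpl. apply (o_trans HX).
  - intros [x px] [y py]; simpl. destruct (o_trich HX x y) as [h|[h|h]]; auto.
    right; left. apply sig_eq; auto.
  - simpl. apply (wf_inverse_image _ _ (@lt X) (fun x : {x : X | P x} => proj1_sig x)). apply (o_wf HX).
Qed.

Lemma segment_ord (X : LO) (a : X) : is_ordinal X -> is_ordinal (segment X a).
Proof. intro HX. exact (sub_ord (fun x => lt x a) HX). Qed.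

Section Cmp.
Variables W V : LO.
Hypothesis HW : is_ordinal W.
Hypothesis HV : is_ordinal V.
Variable f : W -> V.
Hypothesis Hf : smono f.

Definition minV (P : V -> Prop) (d : V) : V :=
  epsilon (inhabits d) (fun v => P v /\ forall v', P v' -> ~ lt v' v).

Lemma minV_spec P d : (exists v, P v) -> P (minV P d) /\ forall v', P v' -> ~ lt v' (minV P d).
Proof.
  intro H. unfold minV. apply epsilon_spec. apply (o_min HV P H).
Qed.

Definition hstep (x : W) (rec : forall y, lt y x -> V) : V :=
  minV (fun v => forall y (H : lt y x), lt (rec y H) v) (f x).

Definition hh : W -> V := Fix (o_wf HW) (fun _ => V) hstep.

Lemma hh_eq x : hh x = minV (fun v => forall y, lt y x -> lt (hh y) v) (f x).
Proof.
  unfold hh. rewrite Fix_eq. { reflexivity. }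
  intros x0 f1 g1 H. unfold hstep.
  assert (f1 = g1) as ->. { extensionality y. extensionality p. auto. }
  reflexivity.
Qed.

Lemma hh_prop : forall x, le (hh x) (f x) /\ forall y, lt y x -> lt (hh y) (hh x).
Proof.
  intro x. induction x as [x IH] using (well_founded_ind (o_wf HW)).
  set (P := fun v => forall y, lt y x -> lt (hh y) v).
  assert (Pf : P (f x)).
  { intros y hy. destruct (IH y hy) as [h1 _]. eapply (o_le_lt_trans HV h1). apply Hf; auto. }
  destruct (minV_spec P (f x) (ex_intro _ _ Pf)) as [h1 h2].
  assert (E : minV P (f x) = hh x) by (rewrite hh_eq; reflexivity).
  rewrite E in h1, h2. split; auto.
  apply (o_nlt_le HV). apply h2; auto.
Qed.

Lemma hh_mono : smono hh.
Proof. intros x y h. apply (proj2 (hh_prop y)); auto. Qed.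

Lemma hh_down : forall x v, lt v (hh x) -> exists y, lt y x /\ hh y = v.
Proof.
  intro x. induction x as [x IH] using (well_founded_ind (o_wf HW)).
  intros v hv.
  set (P := fun v => forall y, lt y x -> lt (hh y) v).
  assert (Pf : P (f x)).
  { intros y hy. destruct (hh_prop y) as [h1 _]. eapply (o_le_lt_trans HV h1). apply Hf; auto. }
  destruct (minV_spec P (f x) (ex_intro _ _ Pf)) as [h1 h2].
  assert (E : minV P (f x) = hh x) by (rewrite hh_eq; reflexivity).
  rewrite E in h1, h2.
  assert (~ P v) as nP by (intro Pv; exact (h2 v Pv hv)).
  apply not_all_ex_not in nP. destruct nP as [y hy].
  apply imply_to_and in hy. destruct hy as [hy1 hy2].
  destruct (o_nlt_le HV hy2) as [h3|h3].
  - destruct (IH y hy1 v h3) as [z [hz1 hz2]]. exists z. split; auto. eapply (o_trans HW); eauto.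
  - exists y; auto.
Qed.

Theorem compare : ord_iso W V \/ exists v, ord_iso W (segment V v).
Proof.
  destruct (classic (forall v, exists x, hh x = v)) as [Hs|Hn].
  - left. apply (iso_of_surj HW HV hh_mono Hs).
  - right. apply not_all_ex_not in Hn.
    destruct (o_min HV (fun v => ~ exists x, hh x = v) Hn) as [v0 [hv0 hmin]].
    assert (hlt : forall x, lt (hh x) v0).
    { intro x. destruct (o_trich HV (hh x) v0) as [h|[h|h]]; auto.
      - exfalso; apply hv0; eauto.
      - destruct (hh_down x _ h) as [y [_ hy]]. exfalso; apply hv0; eauto. }
    exists v0.
    apply (@iso_of_surj W (segment V v0) HW (segment_ord v0 HV) (fun x => exist _ (hh x) (hlt x))).
    + intros x y h. simpl. apply hh_mono; auto.
    + intros [v hv]. assert (exists x, hh x = v) as [x hx].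
      { apply NNPP. intro hn. exact (hmin v hn hv). }
      exists x. apply sig_eq. simpl. auto.
Qed.

End Cmp.

Lemma SB {W V : LO} (HW : is_ordinal W) (HV : is_ordinal V) (f : W -> V) (g : V -> W) :
  smono f -> smono g -> ord_iso W V.
Proof.
  intros Hf Hg. destruct (compare HW HV Hf) as [H|[v [p [q [H1 [H2 H3]]]]]]; auto.
  exfalso.
  set (k := fun x => proj1_sig (p (g x))).
  assert (Hk : smono k).
  { intros x y h. unfold k. apply H3. apply Hg. auto. }
  apply (smono_ge HV Hk v). unfold k. exact (proj2_sig (p (g v))).
Qed.

Unset Implicit Arguments.


Definition dec (P : Prop) : bool := if excluded_middle_informative P then true else false.
Lemma dec_t (P : Prop) : P -> dec P = true.
Proof. unfold dec; destruct (excluded_middle_informative P); tauto. Qed.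
Lemma dec_f (P : Prop) : ~ P -> dec P = false.
Proof. unfold dec; destruct (excluded_middle_informative P); tauto. Qed.
Lemma dec_spec (P : Prop) : (P /\ dec P = true) \/ (~ P /\ dec P = false).
Proof. destruct (classic P); [left; split; auto using dec_t | right; split; auto using dec_f]. Qed.

Lemma fin_ord n : is_ordinal (fin n).
Proof.
  split; [|split; [|split]].
  - intros [x px]; simpl. lia.
  - intros [x px] [y py] [z pz]; simpl. lia.
  - intros [x px] [y py]; simpl. destruct (lt_eq_lt_dec x y) as [[h|h]|h]; auto.
    right; left. apply sig_eq; auto.
  - simpl. apply (wf_inverse_image _ _ Peano.lt (fun x : {i : nat | i < n} => proj1_sig x)). apply lt_wf.
Qed.

Lemma succ_ord (L : LO) : is_ordinal L -> is_ordinal (succ L).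
Proof.
  intros HL. split; [|split; [|split]].
  - intros [x|]; simpl; auto. apply (o_irr HL).
  - intros [x|] [y|] [z|]; simpl; auto; try tauto. apply (o_trans HL).
  - intros [x|] [y|]; simpl; auto. destruct (o_trich HL x y) as [h|[h|h]]; subst; auto.
  - assert (HS : forall x : L, Acc (@lt (succ L)) (Some x)).
    { intro x. induction x as [x IH] using (well_founded_ind (o_wf HL)).
      constructor. intros [y|] h; simpl in h; try tauto. apply IH; auto. }
    intros [x|]; auto. constructor. intros [y|] h; simpl in h; try tauto. auto.
Qed.

Lemma osum_ord (L M : LO) : is_ordinal L -> is_ordinal M -> is_ordinal (osum L M).
Proof.
  intros HL HM. split; [|split; [|split]].
  - intros [x|x]; simpl; [apply (o_irr HL)|apply (o_irr HM)].
  - intros [x|x] [y|y] [z|z]; simpl; auto; try tauto; [apply (o_trans HL)|apply (o_trans HM)].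
  - intros [x|x] [y|y]; simpl; auto.
    + destruct (o_trich HL x y) as [h|[h|h]]; subst; auto.
    + destruct (o_trich HM x y) as [h|[h|h]]; subst; auto.
  - assert (HS : forall x : L, Acc (@lt (osum L M)) (inl x)).
    { intro x. induction x as [x IH] using (well_founded_ind (o_wf HL)).
      constructor. intros [y|y] h; simpl in h; try tauto. apply IH; auto. }
    intros [x|x]; auto.
    induction x as [x IH] using (well_founded_ind (o_wf HM)).
    constructor. intros [y|y] h; simpl in h; auto.
Qed.

Lemma mul_nat_ord (L : LO) k : is_ordinal L -> is_ordinal (mul_nat L k).
Proof.
  intros HL. split; [|split; [|split]].
  - intros [[i pi] x]; simpl. intros [h|[_ h]]; [lia|apply (o_irr HL _ h)].
  - intros [[i pi] x] [[j pj] y] [[l pl] z]; simpl.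
    intros [h|[h1 h2]] [h'|[h1' h2']]; try (left; lia). right; split; [lia|]. apply (o_trans HL h2 h2').
  - intros [[i pi] x] [[j pj] y]; simpl.
    destruct (lt_eq_lt_dec i j) as [[h|h]|h]; auto.
    subst. destruct (o_trich HL x y) as [h|[h|h]]; auto.
    subst. right; left. f_equal. apply sig_eq; auto.
  - intros [[i pi] x].
    revert pi x. induction i as [i IHi] using (well_founded_ind lt_wf). intros pi x.
    induction x as [x IH] using (well_founded_ind (o_wf HL)).
    constructor. intros [[j pj] y]; simpl. intros [h|[h1 h2]].
    + apply IHi; auto.
    + simpl in h1. subst. replace pj with pi by apply proof_irrelevance. apply IH; auto.
Qed.

Section OP.
Variable C : LO.
Hypothesis HC : is_ordinal C.

Definition ev (f : opow_car C) : C -> nat := proj1_sig f.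

Lemma op_lt (f g : omega_pow C) :
  lt f g <-> exists x, ev f x < ev g x /\ forall y, lt x y -> ev f y = ev g y.
Proof. reflexivity. Qed.

Lemma op_lt_e (f g : omega_pow C) :
  lt f g -> exists x, ev f x < ev g x /\ forall y, lt x y -> ev f y = ev g y.
Proof. intro h; exact h. Qed.
Lemma op_lt_i (f g : omega_pow C) x :
  ev f x < ev g x -> (forall y, lt x y -> ev f y = ev g y) -> lt f g.
Proof. intros h1 h2. exists x. split; auto. Qed.

Lemma op_eq (f g : omega_pow C) : (forall x, ev f x = ev g x) -> f = g.
Proof. intro H. apply sig_eq. extensionality x. apply H. Qed.

Lemma op_supp (f : opow_car C) : exists l, forall x, ev f x <> 0 -> In x l.
Proof. exact (proj2_sig f). Qed.

Lemma supp2 (f g : opow_car C) (F : C -> nat) (extra : list C) :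
  (forall x, F x <> 0 -> ev f x <> 0 \/ ev g x <> 0 \/ In x extra) ->
  exists l, forall x, F x <> 0 -> In x l.
Proof.
  intro H. destruct (op_supp f) as [l1 h1], (op_supp g) as [l2 h2].
  exists (l1 ++ l2 ++ extra). intros x hx. apply in_or_app.
  destruct (H x hx) as [h|[h|h]]; [left; auto|right; apply in_or_app; auto..].
Qed.

Definition mk (F : C -> nat) (H : exists l, forall x, F x <> 0 -> In x l) : omega_pow C := exist _ F H.

Lemma ev_mk F H x : ev (mk F H) x = F x.
Proof. reflexivity. Qed.

Lemma op_diff_max (f g : omega_pow C) : f <> g ->
  exists p, ev f p <> ev g p /\ forall q, lt p q -> ev f q = ev g q.
Proof.
  intro hne. destruct (op_supp f) as [l1 h1], (op_supp g) as [l2 h2].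
  destruct (o_max_list HC (fun x => ev f x <> ev g x) (l1 ++ l2)) as [p [hp1 hp2]].
  - intros x hx. apply in_or_app. destruct (Nat.eq_dec (ev f x) 0); [right; apply h2; lia|left; apply h1; auto].
  - apply NNPP. intro hn. apply hne. apply op_eq. intro x. apply NNPP. intro h. eauto.
  - exists p. split; auto. intros q hq. apply NNPP. intro h. destruct (hp2 q h) as [h'|h'].
    + apply (o_asym HC hq h').
    + subst. apply (o_irr HC _ hq).
Qed.

Definition low (t : C) (f : opow_car C) := forall y, lt t y -> ev f y = 0.
Definition below (t : C) (f : opow_car C) := forall y, le t y -> ev f y = 0.

Lemma cut_supp (f : opow_car C) (t : C) :
  exists l, forall x, (if dec (lt x t) then ev f x else 0) <> 0 -> In x l.
Proof. apply (supp2 f f _ nil). intros x. destruct (dec (lt x t)); auto. Qed.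

Definition cut (f : opow_car C) (t : C) : omega_pow C := mk _ (cut_supp f t).

Lemma ev_cut f t x : ev (cut f t) x = if dec (lt x t) then ev f x else 0.
Proof. reflexivity. Qed.

Lemma acc_zero (f : omega_pow C) : (forall x, ev f x = 0) -> Acc (@lt (omega_pow C)) f.
Proof. intro H. constructor. intros g hg. destruct (op_lt_e _ _ hg) as [x [hx _]]. rewrite H in hx. lia. Qed.

Lemma omega_pow_wf : well_founded (@lt (omega_pow C)).
Proof.
  assert (Main : forall t f, low t f -> Acc (@lt (omega_pow C)) f).
  { intro t. induction t as [t IHt] using (well_founded_ind (o_wf HC)).
    assert (Step1 : forall f, below t f -> Acc (@lt (omega_pow C)) f).
    { intros f hf. destruct (classic (exists x, ev f x <> 0)) as [hx|hx].
      - destruct (op_supp f) as [l hl].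
        destruct (o_max_list HC (fun x => ev f x <> 0) l hl hx) as [s [hs1 hs2]].
        apply (IHt s).
        + destruct (o_trich HC s t) as [h|[h|h]]; auto.
          * subst. exfalso. apply hs1. apply hf. right; auto.
          * exfalso. apply hs1. apply hf. left; auto.
        + intros y hy. apply NNPP. intro h. apply (o_le_nlt HC (hs2 y h) hy).
      - apply acc_zero. intro x. apply NNPP. intro h. eauto. }
    intros f hf.
    remember (ev f t) as n eqn:Hn. revert f hf Hn.
    induction n as [n IHn] using (well_founded_ind lt_wf).
    assert (Inner : forall r, Acc (@lt (omega_pow C)) r -> below t r ->
              forall f, low t f -> n = ev f t -> (forall y, lt y t -> ev f y = ev r y) ->
              Acc (@lt (omega_pow C)) f).
    { intros r Ar. induction Ar as [r _ IHr]. intros hr f hf hn hfr.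
      constructor. intros g hgf. destruct (op_lt_e _ _ hgf) as [p [hp1 hp2]].
      assert (hpt : ~ lt t p). { intro h. rewrite (hf p h) in hp1. lia. }
      assert (hg : low t g).
      { intros y hy. rewrite hp2. apply hf; auto.
        destruct (o_trich HC p y) as [h|[h|h]]; auto.
        - subst. tauto.
        - exfalso. apply hpt. apply (o_trans HC hy h). }
      destruct (o_trich HC p t) as [h|[h|h]].
      + apply (IHr (cut g t)).
        * apply (op_lt_i _ _ p). { rewrite ev_cut, dec_t by auto. rewrite <- hfr by auto. auto. }
          intros y hy. rewrite ev_cut. destruct (dec_spec (lt y t)) as [[h1 h2]|[h1 h2]]; rewrite h2.
          -- rewrite <- hfr by auto. auto.
          -- symmetry. apply hr. apply (o_nlt_le HC h1).
        * intros y hy. rewrite ev_cut, dec_f; auto. apply (o_le_nlt HC hy).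
        * auto.
        * rewrite hp2 by auto. auto.
        * intros y hy. rewrite ev_cut, dec_t; auto.
      + subst p. apply (IHn (ev g t)); auto. lia.
      + tauto. }
    intros f hf hn. apply (Inner (cut f t)).
    - apply Step1. intros y hy. rewrite ev_cut, dec_f; auto. apply (o_le_nlt HC hy).
    - intros y hy. rewrite ev_cut, dec_f; auto. apply (o_le_nlt HC hy).
    - auto.
    - auto.
    - intros y hy. rewrite ev_cut, dec_t; auto. }
  intro f. destruct (classic (exists x, ev f x <> 0)) as [hx|hx].
  - destruct (op_supp f) as [l hl].
    destruct (o_max_list HC (fun x => ev f x <> 0) l hl hx) as [s [hs1 hs2]].
    apply (Main s). intros y hy. apply NNPP. intro h. apply (o_le_nlt HC (hs2 y h) hy).
  - apply acc_zero. intro x. apply NNPP. intro h. eauto.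
Qed.

Lemma omega_pow_ord : is_ordinal (omega_pow C).
Proof.
  split; [|split; [|split]].
  - intros f hf. destruct (op_lt_e _ _ hf) as [x [hx _]]. lia.
  - intros f g h hfg hgh. 
    destruct (op_lt_e _ _ hfg) as [x [hx1 hx2]]. destruct (op_lt_e _ _ hgh) as [y [hy1 hy2]].
    destruct (o_trich HC x y) as [e|[e|e]].
    + apply (op_lt_i _ _ y). { rewrite hx2 by auto. auto. } intros z hz. rewrite hx2, hy2; auto. apply (o_trans HC e hz).
    + subst. apply (op_lt_i _ _ y). { lia. } intros z hz. rewrite hx2, hy2; auto.
    + apply (op_lt_i _ _ x). { rewrite <- (hy2 x) by auto. auto. } intros z hz. rewrite hx2, hy2; auto. apply (o_trans HC e hz).
  - intros f g. destruct (classic (f = g)) as [e|e]; auto.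
    destruct (op_diff_max _ _ e) as [p [hp1 hp2]].
    destruct (lt_eq_lt_dec (ev f p) (ev g p)) as [[h|h]|h]; try tauto.
    + left. apply (op_lt_i _ _ p); auto.
    + right; right. apply (op_lt_i _ _ p); auto. intros q hq; symmetry; auto.
  - apply omega_pow_wf.
Qed.

End OP.

Lemma interval_open (X : LO) lo hi : ord_open X (in_interval X lo hi).
Proof. intros x hx. exists lo, hi. split; auto. Qed.

Lemma all_open (X : LO) : ord_open X (fun _ => True).
Proof. intros x _. exists None, None. repeat split. Qed.

Lemma iso_cont (X Y : LO) (f : X -> Y) (g : Y -> X) :
  (forall y, f (g y) = y) -> (forall x x', lt x x' <-> lt (f x) (f x')) -> ord_continuous X Y f.
Proof.
  intros fg mono V hV x hx. destruct (hV (f x) hx) as [lo [hi [[h1 h2] h3]]].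
  exists (option_map g lo), (option_map g hi). split.
  - split.
    + destruct lo as [a|]; simpl in *; auto. apply mono. rewrite fg. auto.
    + destruct hi as [b|]; simpl in *; auto. apply mono. rewrite fg. auto.
  - intros z [hz1 hz2]. apply h3. split.
    + destruct lo as [a|]; simpl in *; auto. rewrite <- (fg a). apply mono. auto.
    + destruct hi as [b|]; simpl in *; auto. rewrite <- (fg b). apply mono. auto.
Qed.

Lemma iso_homeo (X Y : LO) : ord_iso X Y -> homeomorphic X Y.
Proof.
  intros H. pose proof (iso_sym H) as H'.
  destruct H as [f [g [gf [fg mono]]]]. destruct H' as [g' [f' [_ [_ mono']]]].
  exists f, g. repeat split; auto.
  - apply (iso_cont X Y f g); auto.
  - apply (iso_cont Y X g f); auto.
    intros y y'. split; intro h.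
    + apply mono. rewrite !fg. auto.
    + apply mono in h. rewrite !fg in h. auto.
Qed.

Lemma homeo_refl X : homeomorphic X X.
Proof. apply iso_homeo, iso_refl. Qed.

Lemma homeo_sym X Y : homeomorphic X Y -> homeomorphic Y X.
Proof. intros [f [g [h1 [h2 [h3 h4]]]]]. exists g, f. auto. Qed.

Lemma homeo_trans X Y Z : homeomorphic X Y -> homeomorphic Y Z -> homeomorphic X Z.
Proof.
  intros [f [g [h1 [h2 [h3 h4]]]]] [f' [g' [h1' [h2' [h3' h4']]]]].
  exists (fun x => f' (f x)), (fun z => g (g' z)). split; [|split; [|split]].
  - intro x. rewrite h1', h1. auto.
  - intro z. rewrite h2, h2'. auto.
  - intros V hV. apply (h3 (fun y => V (f' y))). apply h3'. auto.
  - intros V hV. apply (h4' (fun y => V (g y))). apply h4. auto.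
Qed.

Lemma iso_homeo_trans X Y Z : ord_iso X Y -> homeomorphic Y Z -> homeomorphic X Z.
Proof. intros h1 h2. eapply homeo_trans; [apply iso_homeo|]; eauto. Qed.
Lemma homeo_iso_trans X Y Z : homeomorphic X Y -> ord_iso Y Z -> homeomorphic X Z.
Proof. intros h1 h2. eapply homeo_trans; [|apply iso_homeo]; eauto. Qed.

Definition maxe (L : LO) := (forall x : L, False) \/ exists m : L, forall x, ~ lt m x.

Lemma osum_open_l (L M : LO) U : ord_open (osum L M) U -> ord_open L (fun x => U (inl x)).
Proof.
  intros hU x hx. destruct (hU (inl x) hx) as [lo [hi [[h1 h2] h3]]].
  exists (match lo with Some (inl a) => Some a | _ => None end),
         (match hi with Some (inl b) => Some b | _ => None end).
  split.
  - split.
    + destruct lo as [[a|a]|]; simpl in *; auto.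
    + destruct hi as [[b|b]|]; simpl in *; auto.
  - intros z [hz1 hz2]. apply h3. split.
    + destruct lo as [[a|a]|]; simpl in *; auto.
    + destruct hi as [[b|b]|]; simpl in *; auto.
Qed.

Lemma osum_open_r (L M : LO) U : ord_open (osum L M) U -> ord_open M (fun x => U (inr x)).
Proof.
  intros hU x hx. destruct (hU (inr x) hx) as [lo [hi [[h1 h2] h3]]].
  exists (match lo with Some (inr a) => Some a | _ => None end),
         (match hi with Some (inr b) => Some b | _ => None end).
  split.
  - split.
    + destruct lo as [[a|a]|]; simpl in *; auto.
    + destruct hi as [[b|b]|]; simpl in *; auto.
  - intros z [hz1 hz2]. apply h3. split.
    + destruct lo as [[a|a]|]; simpl in *; auto.
    + destruct hi as [[b|b]|]; simpl in *; auto.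
Qed.

Lemma osum_open_lr (L M : LO) (HM : is_ordinal M) (HL : maxe L) U :
  ord_open L (fun x => U (inl x)) -> ord_open M (fun x => U (inr x)) -> ord_open (osum L M) U.
Proof.
  intros h1 h2 [x|x] hx.
  - destruct (h1 x hx) as [lo [hi [[i1 i2] i3]]].
    destruct (classic (exists y : M, True)) as [[y _]|hM].
    + destruct (o_min HM (fun _ => True) (ex_intro _ y I)) as [m0 [_ hm0]].
      exists (option_map inl lo), (match hi with Some b => Some (inl b) | None => Some (inr m0) end).
      split.
      * split; [destruct lo; simpl in *; auto|destruct hi; simpl in *; auto].
      * intros [z|z] [k1 k2].
        -- apply i3. split; [destruct lo; simpl in *; auto|destruct hi; simpl in *; auto].
        -- exfalso. destruct hi; simpl in *; auto. apply (hm0 z I k2).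
    + exists (option_map inl lo), (option_map inl hi). split.
      * split; [destruct lo; simpl in *; auto|destruct hi; simpl in *; auto].
      * intros [z|z] [k1 k2].
        -- apply i3. split; [destruct lo; simpl in *; auto|destruct hi; simpl in *; auto].
        -- exfalso. apply hM. exists z; auto.
  - destruct (h2 x hx) as [lo [hi [[i1 i2] i3]]].
    destruct HL as [hL|[m hm]].
    + exists (option_map inr lo), (option_map inr hi). split.
      * split; [destruct lo; simpl in *; auto|destruct hi; simpl in *; auto].
      * intros [z|z] [k1 k2].
        -- destruct (hL z).
        -- apply i3. split; [destruct lo; simpl in *; auto|destruct hi; simpl in *; auto].
    + exists (match lo with Some a => Some (inr a) | None => Some (inl m) end), (option_map inr hi).
      split.
      * split; [destruct lo; simpl in *; auto|destruct hi; simpl in *; auto].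
      * intros [z|z] [k1 k2].
        -- exfalso. destruct lo; simpl in *; auto. apply (hm z k1).
        -- apply i3. split; [destruct lo; simpl in *; auto|destruct hi; simpl in *; auto].
Qed.

Definition swp {P Q : LO} (z : osum P Q) : osum Q P :=
  match z with inl x => inr x | inr y => inl y end.

Lemma osum_swap (P Q : LO) (HP : is_ordinal P) (HQ : is_ordinal Q) (mP : maxe P) (mQ : maxe Q) :
  homeomorphic (osum P Q) (osum Q P).
Proof.
  exists swp, swp. split; [|split; [|split]].
  - intros [x|x]; reflexivity.
  - intros [x|x]; reflexivity.
  - intros V hV. apply (osum_open_lr P Q HQ mP).
    + exact (osum_open_r Q P V hV).
    + exact (osum_open_l Q P V hV).
  - intros V hV. apply (osum_open_lr Q P HP mQ).
    + exact (osum_open_r P Q V hV).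
    + exact (osum_open_l P Q V hV).
Qed.

Lemma osum_homeo_l (M1 M2 T : LO) (HT : is_ordinal T) (m1 : maxe M1) (m2 : maxe M2) :
  homeomorphic M1 M2 -> homeomorphic (osum M1 T) (osum M2 T).
Proof.
  intros [f [g [gf [fg [cf cg]]]]].
  exists (fun z : osum M1 T => match z with inl x => inl (f x) | inr y => inr y end : osum M2 T).
  exists (fun z : osum M2 T => match z with inl x => inl (g x) | inr y => inr y end : osum M1 T).
  split; [|split; [|split]].
  - intros [x|x]; simpl; [rewrite gf|]; auto.
  - intros [x|x]; simpl; [rewrite fg|]; auto.
  - intros V hV. apply (osum_open_lr M1 T HT m1).
    + apply (cf (fun x => V (inl x))). exact (osum_open_l M2 T V hV).
    + exact (osum_open_r M2 T V hV).
  - intros V hV. apply (osum_open_lr M2 T HT m2).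
    + apply (cg (fun x => V (inl x))). exact (osum_open_l M1 T V hV).
    + exact (osum_open_r M1 T V hV).
Qed.

Lemma osum_iso (A A' B B' : LO) : ord_iso A A' -> ord_iso B B' -> ord_iso (osum A B) (osum A' B').
Proof.
  intros [f [g [h1 [h2 h3]]]] [f' [g' [h1' [h2' h3']]]].
  exists (fun z : osum A B => match z with inl x => inl (f x) | inr y => inr (f' y) end : osum A' B').
  exists (fun z : osum A' B' => match z with inl x => inl (g x) | inr y => inr (g' y) end : osum A B).
  split; [|split].
  - intros [x|x]; simpl; [rewrite h1|rewrite h1']; auto.
  - intros [x|x]; simpl; [rewrite h2|rewrite h2']; auto.
  - intros [x|x] [y|y]; simpl; try tauto; auto.
Qed.

Definition acc_o (X : LO) (x : X) (T : X -> Prop) :=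
  forall U, ord_open X U -> U x -> exists y, y <> x /\ U y /\ T y.

Definition acc_i (X : LO) (x : X) (T : X -> Prop) :=
  forall lo hi, in_interval X lo hi x -> exists y, y <> x /\ in_interval X lo hi y /\ T y.

Lemma acc_iff (X : LO) x T : acc_i X x T <-> acc_o X x T.
Proof.
  split.
  - intros H U hU hx. destruct (hU x hx) as [lo [hi [h1 h2]]].
    destruct (H lo hi h1) as [y [k1 [k2 k3]]]. exists y; auto.
  - intros H lo hi h. apply (H _ (interval_open X lo hi) h).
Qed.

Lemma acc_mono (X : LO) x (T T' : X -> Prop) : (forall z, T z -> T' z) -> acc_o X x T -> acc_o X x T'.
Proof. intros H h U hU hx. destruct (h U hU hx) as [y [k1 [k2 k3]]]. eauto. Qed.

Lemma acc_homeo (X Y : LO) (f : X -> Y) (g : Y -> X) :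
  (forall x, g (f x) = x) -> ord_continuous X Y f ->
  forall x T, acc_o X x T -> acc_o Y (f x) (fun y => T (g y)).
Proof.
  intros gf cf x T h U hU hx. destruct (h (fun z => U (f z)) (cf U hU) hx) as [y [k1 [k2 k3]]].
  exists (f y). split; [|split]; auto.
  - intro e. apply k1. rewrite <- (gf y), e, gf. auto.
  - rewrite gf. auto.
Qed.

Definition compact_in (X : LO) (K : X -> Prop) :=
  forall (I : Type) (U : I -> X -> Prop), (forall i, ord_open X (U i)) ->
    (forall x, K x -> exists i, U i x) -> exists l : list I, forall x, K x -> exists i, In i l /\ U i x.

Definition bnd_top (X : LO) (T : X -> Prop) := exists K, compact_in X K /\ forall x, T x -> K x.
Definition bnd_ord (X : LO) (T : X -> Prop) := exists u : X, forall x, T x -> le x u.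

Lemma bnd_top_homeo (X Y : LO) (f : X -> Y) (g : Y -> X) :
  (forall x, g (f x) = x) -> (forall y, f (g y) = y) -> ord_continuous X Y f ->
  forall T, bnd_top X T -> bnd_top Y (fun y => T (g y)).
Proof.
  intros gf fg cf T [K [hK hT]]. exists (fun y => K (g y)). split; auto.
  intros I U hU hc. destruct (hK I (fun i x => U i (f x))) as [l hl].
  - intro i. apply cf. auto.
  - intros x hx. apply hc. rewrite gf. auto.
  - exists l. intros y hy. destruct (hl (g y) hy) as [i [k1 k2]]. exists i. split; auto.
    rewrite fg in k2. auto.
Qed.

Lemma compact_interval (X : LO) (HX : is_ordinal X) (u : X) : compact_in X (fun x => le x u).
Proof.
  intros I U hU hc.
  assert (H : forall x, le x u -> exists l : list I, forall z, le z x -> exists i, In i l /\ U i z).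
  { intro x. induction x as [x IH] using (well_founded_ind (o_wf HX)). intros hx.
    destruct (hc x hx) as [i0 hi0]. destruct (hU i0 x hi0) as [lo [hi [[k1 k2] k3]]].
    destruct lo as [a|].
    - destruct (IH a k1 (o_le_trans HX (or_introl k1) hx)) as [l hl].
      exists (i0 :: l). intros z hz. destruct (classic (le z a)) as [h|h].
      + destruct (hl z h) as [i [j1 j2]]. exists i. split; simpl; auto.
      + exists i0. split; simpl; auto. apply k3. split.
        * simpl. destruct (o_trich HX a z) as [e|[e|e]]; auto; exfalso; apply h; [right|left]; auto.
        * destruct hi as [b|]; simpl in *; auto. apply (o_le_lt_trans HX hz k2).
    - exists [i0]. intros z hz. exists i0. split; simpl; auto. apply k3. split; simpl; auto.
      destruct hi as [b|]; simpl in *; auto. apply (o_le_lt_trans HX hz k2). }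
  destruct (H u (or_intror eq_refl)) as [l hl]. exists l. intros x hx. apply hl; auto.
Qed.

Lemma bnd_equiv (X : LO) (HX : is_ordinal X) (x0 : X) T : bnd_top X T <-> bnd_ord X T.
Proof.
  split.
  - intros [K [hK hT]].
    destruct (classic (exists m : X, forall x, ~ lt m x)) as [[m hm]|hn].
    + exists m. intros x _. apply (o_nlt_le HX (hm x)).
    + assert (hall : forall m : X, exists x, lt m x).
      { intro m. apply NNPP. intro h. apply hn. exists m. intros x hx. apply h. eauto. }
      destruct (hK X (fun x z => lt z x)) as [l hl].
      * intros i z hz. exists None, (Some i). split; [split; simpl; auto|].
        intros y [_ hy]. exact hy.
      * intros x _. apply hall.
      * destruct l as [|a l].
        -- exists x0. intros x hx. destruct (hl x (hT x hx)) as [i [[] _]].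
        -- destruct (o_max_list HX (fun x => In x (a :: l)) (a :: l)) as [m [_ hm]]; auto.
           { exists a; simpl; auto. }
           exists m. intros x hx. destruct (hl x (hT x hx)) as [i [k1 k2]].
           left. apply (o_lt_le_trans HX k2 (hm i k1)).
  - intros [u hu]. exists (fun x => le x u). split; auto. apply compact_interval; auto.
Qed.

Definition deriv (X : LO) (F : X -> Prop) : X -> Prop := fun x => acc_o X x F.

Inductive CB (X : LO) : (X -> Prop) -> Prop :=
| cb_all : CB X (fun _ => True)
| cb_der : forall F, CB X F -> CB X (deriv X F)
| cb_int : forall (P : (X -> Prop) -> Prop), (forall F, P F -> CB X F) -> CB X (fun x => forall F, P F -> F x)
| cb_ext : forall F G, CB X F -> (forall x, F x <-> G x) -> CB X G.

Lemma CB_homeo (X Y : LO) (f : X -> Y) (g : Y -> X) :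
  (forall x, g (f x) = x) -> (forall y, f (g y) = y) -> ord_continuous X Y f -> ord_continuous Y X g ->
  forall F, CB X F -> CB Y (fun y => F (g y)).
Proof.
  intros gf fg cf cg F H. induction H as [|F H IH|P H IH|F G H IH e].
  - apply cb_all.
  - apply (cb_ext Y (deriv Y (fun y => F (g y)))). { apply cb_der; auto. }
    intro y. unfold deriv. split; intro h.
    + pose proof (acc_homeo Y X g f fg cg y _ h) as h'.
      apply (acc_mono X _ (fun x => F (g (f x)))); auto. intros z hz. rewrite gf in hz. auto.
    + pose proof (acc_homeo X Y f g gf cf (g y) F h) as h'. rewrite fg in h'. auto.
  - apply (cb_ext Y (fun y => forall G, (exists F, P F /\ forall y, G y <-> F (g y)) -> G y)).
    + apply cb_int. intros G [F [hF e]]. apply (cb_ext Y (fun y => F (g y))); auto.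
      intro y; rewrite e; tauto.
    + intro y. split.
      * intros h F hF. apply (h (fun y => F (g y))). exists F; split; auto. tauto.
      * intros h G [F [hF e]]. apply e. apply (h F hF).
  - apply (cb_ext Y (fun y => F (g y))); auto.
Qed.

Definition RF (X W : LO) (rho : X -> W) :=
  forall x z : X, lt (rho z) (rho x) <-> acc_o X x (fun y => le (rho z) (rho y)).

Section RFS.
Variables X W : LO.
Hypothesis HW : is_ordinal W.
Variable rho : X -> W.
Hypothesis Hr : RF X W rho.

Lemma E_CB : forall w, CB X (fun y => le w (rho y)).
Proof.
  intro w. induction w as [w IH] using (well_founded_ind (o_wf HW)).
  apply (cb_ext X (fun y => forall G, (exists z, lt (rho z) w /\
            forall y, G y <-> deriv X (fun y' => le (rho z) (rho y')) y) -> G y)).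
  - apply cb_int. intros G [z [hz e]].
    apply (cb_ext X (deriv X (fun y' => le (rho z) (rho y')))).
    + apply cb_der. apply IH; auto.
    + intro y; rewrite e; tauto.
  - intro y. split.
    + intro h. apply (o_nlt_le HW). intro hy.
      assert (hd : deriv X (fun y' => le (rho y) (rho y')) y).
      { apply (h (deriv X (fun y' => le (rho y) (rho y')))). exists y. split; auto. intro; tauto. }
      unfold deriv in hd. apply Hr in hd. apply (o_irr HW _ hd).
    + intros h G [z [hz e]]. apply e. unfold deriv. apply Hr. apply (o_lt_le_trans HW hz h).
Qed.

Lemma CB_up : forall F, CB X F -> forall y y', F y -> le (rho y) (rho y') -> F y'.
Proof.
  intros F H. induction H as [|F H IH|P H IH|F G H IH e].
  - auto.
  - intros y y' hy hle. unfold deriv in *.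
    destruct (classic (exists u, F u)) as [hu|hu].
    + destruct (o_min HW (fun w => exists u, F u /\ rho u = w)) as [w0 [[u0 [hu0 e0]] hmin]].
      { destruct hu as [u hu]. eauto. }
      subst w0.
      assert (eqF : forall v, F v <-> le (rho u0) (rho v)).
      { intro v. split; intro h.
        - apply (o_nlt_le HW). intro h'. apply (hmin (rho v)); eauto.
        - apply (IH u0 v hu0 h). }
      assert (h1 : acc_o X y (fun v => le (rho u0) (rho v))).
      { apply (acc_mono X y F); auto. intros z hz. apply eqF; auto. }
      apply Hr in h1. 
      assert (h2 : acc_o X y' (fun v => le (rho u0) (rho v))).
      { apply Hr. apply (o_lt_le_trans HW h1 hle). }
      apply (acc_mono X y' (fun v => le (rho u0) (rho v)) F); auto. intros z hz. apply eqF; auto.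
    + exfalso. destruct (hy (fun _ => True) (all_open X) I) as [v [_ [_ hv]]]. apply hu; exists v; exact hv.
  - intros y y' hy hle G hG. apply (IH G hG y y' (hy G hG) hle).
  - intros y y' hy hle. apply e. apply (IH y); auto. apply e; auto.
Qed.

Lemma RF_CB x z : lt (rho z) (rho x) <-> exists F, CB X F /\ F x /\ ~ F z.
Proof.
  split.
  - intro h. exists (fun y => le (rho x) (rho y)). split; [apply E_CB|split].
    + right; auto.
    + intro h'. apply (o_le_nlt HW h' h).
  - intros [F [hF [hx hz]]]. apply NNPP. intro h. apply hz.
    apply (CB_up F hF x z hx). apply (o_nlt_le HW h).
Qed.

End RFS.

Lemma rank_transfer (X Y W W' : LO) (HW : is_ordinal W) (HW' : is_ordinal W')
  (rho : X -> W) (sg : Y -> W') (R1 : RF X W rho) (R2 : RF Y W' sg)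
  (f : X -> Y) (g : Y -> X) :
  (forall x, g (f x) = x) -> (forall y, f (g y) = y) -> ord_continuous X Y f -> ord_continuous Y X g ->
  forall x z, lt (rho z) (rho x) <-> lt (sg (f z)) (sg (f x)).
Proof.
  intros gf fg cf cg x z. rewrite (RF_CB X W HW rho R1), (RF_CB Y W' HW' sg R2). split.
  - intros [F [hF [h1 h2]]]. exists (fun y => F (g y)). split; [apply (CB_homeo X Y f g); auto|].
    rewrite !gf. auto.
  - intros [G [hG [h1 h2]]]. exists (fun x => G (f x)). split; [apply (CB_homeo Y X g f); auto|]. auto.
Qed.

Section OPT.
Variable C : LO.
Hypothesis HC : is_ordinal C.

Ltac tri a b := destruct (o_trich HC a b) as [?|[?|?]].

Lemma zero_supp : exists l, forall x : C, (fun _ => 0) x <> 0 -> In x l.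
Proof. exists nil. intros x h. lia. Qed.
Definition zero : omega_pow C := mk C (fun _ => 0) zero_supp.

Lemma ev_zero x : ev C zero x = 0.
Proof. reflexivity. Qed.

Lemma not_lt_zero (f : omega_pow C) : ~ lt f zero.
Proof. intro h. destruct (op_lt_e C _ _ h) as [x [hx _]]. rewrite ev_zero in hx. lia. Qed.

Lemma zero_lt (f : omega_pow C) : f <> zero -> lt zero f.
Proof.
  intro h. destruct (o_trich (omega_pow_ord C HC) zero f) as [e|[e|e]]; auto.
  - congruence.
  - destruct (not_lt_zero _ e).
Qed.

Lemma nz_ex (f : omega_pow C) : f <> zero -> exists d, ev C f d <> 0.
Proof.
  intro h. apply NNPP. intro hn. apply h. apply op_eq. intro x. rewrite ev_zero.
  apply NNPP. intro e. apply hn. eauto.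
Qed.

Lemma upd_supp (f : omega_pow C) (a : C) (n : nat) :
  exists l, forall x, (if dec (x = a) then n else ev C f x) <> 0 -> In x l.
Proof.
  apply (supp2 C f f _ [a]). intros x. destruct (dec_spec (x = a)) as [[h1 h2]|[h1 h2]]; rewrite h2.
  - subst. simpl; auto.
  - auto.
Qed.
Definition upd (f : omega_pow C) (a : C) (n : nat) : omega_pow C := mk C _ (upd_supp f a n).

Lemma ev_upd f a n x : ev C (upd f a n) x = if dec (x = a) then n else ev C f x.
Proof. reflexivity. Qed.
Lemma ev_upd_eq f a n : ev C (upd f a n) a = n.
Proof. rewrite ev_upd, dec_t; auto. Qed.
Lemma ev_upd_ne f a n x : x <> a -> ev C (upd f a n) x = ev C f x.
Proof. intro h. rewrite ev_upd, dec_f; auto. Qed.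

Definition ee (a : C) (n : nat) : omega_pow C := upd zero a n.

Lemma tr_supp (f : omega_pow C) (b : C) :
  exists l, forall x, (if dec (lt b x) then ev C f x else if dec (x = b) then ev C f b + 1 else 0) <> 0 -> In x l.
Proof.
  apply (supp2 C f f _ [b]). intros x.
  destruct (dec (lt b x)); auto. destruct (dec_spec (x = b)) as [[h1 h2]|[h1 h2]]; rewrite h2.
  - subst; simpl; auto.
  - lia.
Qed.
Definition tr (f : omega_pow C) (b : C) : omega_pow C := mk C _ (tr_supp f b).

Lemma ev_tr_gt f b x : lt b x -> ev C (tr f b) x = ev C f x.
Proof. intro h. unfold tr. rewrite ev_mk, dec_t; auto. Qed.
Lemma ev_tr_eq f b : ev C (tr f b) b = ev C f b + 1.
Proof. unfold tr. rewrite ev_mk, dec_f, dec_t; auto. apply (o_irr HC). Qed.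
Lemma ev_tr_lt f b x : lt x b -> ev C (tr f b) x = 0.
Proof.
  intro h. unfold tr. rewrite ev_mk, dec_f, dec_f; auto.
  - intro e; subst; apply (o_irr HC _ h).
  - apply (o_asym HC h).
Qed.

Lemma lt_tr (f : omega_pow C) b : lt f (tr f b).
Proof.
  apply (op_lt_i C _ _ b). { rewrite ev_tr_eq; lia. }
  intros y hy. rewrite ev_tr_gt; auto.
Qed.

Variable c0 : C.
Hypothesis Hc0 : forall c, le c0 c.

Definition sc (f : omega_pow C) : omega_pow C := upd f c0 (ev C f c0 + 1).

Lemma lt_sc (f : omega_pow C) : lt f (sc f).
Proof.
  apply (op_lt_i C _ _ c0). { unfold sc; rewrite ev_upd_eq; lia. }
  intros y hy. unfold sc. rewrite ev_upd_ne; auto. intro e; subst; apply (o_irr HC _ hy).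
Qed.

Lemma sc_le (f g : omega_pow C) : lt f g -> le (sc f) g.
Proof.
  intro h. destruct (op_lt_e C _ _ h) as [p [hp1 hp2]].
  destruct (Hc0 p) as [e|e].
  - left. apply (op_lt_i C _ _ p).
    + unfold sc. rewrite ev_upd_ne; auto. intro e'; subst; apply (o_irr HC _ e).
    + intros y hy. unfold sc. rewrite ev_upd_ne; auto. intro e'; subst. apply (o_asym HC e hy).
  - subst p. destruct (Nat.eq_dec (ev C g c0) (ev C f c0 + 1)) as [e|e].
    + right. apply op_eq. intro x. unfold sc. rewrite ev_upd.
      destruct (dec_spec (x = c0)) as [[h1 h2]|[h1 h2]]; rewrite h2.
      * subst; auto.
      * apply hp2. destruct (Hc0 x); auto. congruence.
    + left. apply (op_lt_i C _ _ c0).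
      * unfold sc. rewrite ev_upd_eq. lia.
      * intros y hy. unfold sc. rewrite ev_upd_ne; auto. intro e'; subst; apply (o_irr HC _ hy).
Qed.

Definition IsRank (f : omega_pow C) (c : C) :=
  (ev C f c <> 0 /\ forall d, lt d c -> ev C f d = 0) \/ ((forall d, ev C f d = 0) /\ c = c0).

Lemma IsRank_ex f : exists c, IsRank f c.
Proof.
  destruct (classic (exists d, ev C f d <> 0)) as [h|h].
  - destruct (o_min HC _ h) as [m [hm1 hm2]]. exists m. left. split; auto.
    intros d hd. apply NNPP. intro e. exact (hm2 d e hd).
  - exists c0. right. split; auto. intro d. apply NNPP. intro e. apply h; eauto.
Qed.

Definition rk (f : omega_pow C) : C := epsilon (inhabits c0) (IsRank f).

Lemma rk_spec f : IsRank f (rk f).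
Proof. unfold rk. apply epsilon_spec. apply IsRank_ex. Qed.

Lemma rk_nz f : (exists d, ev C f d <> 0) -> ev C f (rk f) <> 0 /\ forall d, lt d (rk f) -> ev C f d = 0.
Proof.
  intros [d hd]. destruct (rk_spec f) as [h|[h _]]; [auto|]. exfalso. rewrite h in hd. lia.
Qed.

Lemma rk_zero f : (forall d, ev C f d = 0) -> rk f = c0.
Proof. intro h. destruct (rk_spec f) as [[h1 _]|[_ h2]]; auto. rewrite h in h1. lia. Qed.

Lemma rk_eq f c : ev C f c <> 0 -> (forall d, lt d c -> ev C f d = 0) -> rk f = c.
Proof.
  intros h1 h2. destruct (rk_nz f (ex_intro _ c h1)) as [k1 k2].
  tri (rk f) c; auto.
  - rewrite h2 in k1; auto. lia.
  - rewrite k2 in h1; auto. lia.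
Qed.

Lemma rk_min f d : ev C f d <> 0 -> le (rk f) d.
Proof.
  intro h. destruct (rk_nz f (ex_intro _ d h)) as [k1 k2].
  apply (o_nlt_le HC). intro e. rewrite k2 in h; auto.
Qed.

Lemma rk_tr f b : rk (tr f b) = b.
Proof.
  apply rk_eq. { rewrite ev_tr_eq; lia. } intros d hd. apply ev_tr_lt; auto.
Qed.

Lemma tr_lt (l x : omega_pow C) b : lt l x -> lt b (rk x) -> lt (tr l b) x.
Proof.
  intros h hb. destruct (op_lt_e C _ _ h) as [p [hp1 hp2]].
  assert (hx : ev C x p <> 0) by lia.
  assert (hbp : lt b p) by (apply (o_lt_le_trans HC hb (rk_min x p hx))).
  apply (op_lt_i C _ _ p).
  - rewrite ev_tr_gt; auto.
  - intros y hy. rewrite ev_tr_gt; auto. apply (o_trans HC hbp hy).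
Qed.

Definition pr (f : omega_pow C) : omega_pow C := upd f (rk f) (ev C f (rk f) - 1).

Lemma pr_lt (x : omega_pow C) : x <> zero -> lt (pr x) x.
Proof.
  intro hx. destruct (rk_nz x (nz_ex x hx)) as [k1 k2].
  apply (op_lt_i C _ _ (rk x)).
  - unfold pr. rewrite ev_upd_eq. lia.
  - intros y hy. unfold pr. rewrite ev_upd_ne; auto. intro e; subst; apply (o_irr HC _ hy).
Qed.

Lemma between_pr (x y : omega_pow C) : x <> zero -> lt (pr x) y -> lt y x -> lt (rk y) (rk x).
Proof.
  intros hx h1 h2. destruct (rk_nz x (nz_ex x hx)) as [k1 k2]. set (m := rk x) in *.
  destruct (op_lt_e C _ _ h2) as [p [hp1 hp2]].
  destruct (op_lt_e C _ _ h1) as [q [hq1 hq2]].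
  assert (prm : forall z, z <> m -> ev C (pr x) z = ev C x z).
  { intros z hz. unfold pr. rewrite ev_upd_ne; auto. }
  assert (prm' : ev C (pr x) m = ev C x m - 1) by (unfold pr; rewrite ev_upd_eq; auto).
  assert (hpm : p = m).
  { destruct (o_trich HC p m) as [a1|[a1|a1]]; auto.
    - rewrite k2 in hp1; auto. lia.
    - exfalso. destruct (o_trich HC q p) as [a2|[a2|a2]].
      + pose proof (hq2 p a2) as e. rewrite prm in e; [lia|].
        intro e'; subst; apply (o_irr HC _ a1).
      + subst q. rewrite prm in hq1; [lia|]. intro e; subst. apply (o_irr HC _ a1).
      + pose proof (hp2 q a2) as e. rewrite prm in hq1; [lia|].
        intro e'; subst. apply (o_asym HC a1 a2). }
  subst p.
  assert (hqm : lt q m).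
  { destruct (o_trich HC q m) as [a1|[a1|a1]]; auto.
    - subst q. rewrite prm' in hq1. lia.
    - pose proof (hp2 q a1) as e. rewrite prm in hq1; [lia|]. intro e'; subst. apply (o_irr HC _ a1). }
  rewrite prm in hq1 by (intro e; subst; apply (o_irr HC _ hqm)).
  rewrite k2 in hq1 by auto.
  apply (o_le_lt_trans HC (rk_min y q ltac:(lia)) hqm).
Qed.


Lemma rank_core (x y : omega_pow C) : y <> x -> (x <> zero -> lt (pr x) y) -> lt y (sc x) -> lt (rk y) (rk x).
Proof.
  intros hne hpr hsc. destruct (o_trich (omega_pow_ord C HC) y x) as [e|[e|e]].
  - assert (hx : x <> zero) by (intro h; subst; apply (not_lt_zero _ e)).
    apply between_pr; auto.
  - congruence.
  - exfalso. apply (o_le_nlt (omega_pow_ord C HC) (sc_le _ _ e) hsc).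
Qed.

Definition rkS (g0 : omega_pow C) (x : segment (omega_pow C) g0) : C := rk (proj1_sig x).

Lemma RF_S (g0 : omega_pow C) : RF (segment (omega_pow C) g0) C (rkS g0).
Proof.
  intros x z. rewrite <- acc_iff. generalize (rkS g0 z) as b. intro b. unfold rkS.
  destruct x as [x hxg]; simpl. split.
  - intros hb lo hi [h1 h2].
    set (l := match lo with Some l => proj1_sig l | None => zero end).
    assert (hl : lt l x).
    { destruct lo as [l0|]. { exact h1. }
      apply zero_lt. intro e. subst x. rewrite rk_zero in hb by (intro; apply ev_zero).
      apply (o_le_nlt HC (Hc0 b) hb). }
    assert (hy : lt (tr l b) x) by (apply tr_lt; auto).
    assert (hyg : lt (tr l b) g0) by (apply (o_trans (omega_pow_ord C HC) hy hxg)).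
    exists (exist _ (tr l b) hyg). split; [|split; [split|]].
    + intro e. apply (f_equal (@proj1_sig _ _)) in e. simpl in e. rewrite e in hy.
      apply (o_irr (omega_pow_ord C HC) _ hy).
    + destruct lo as [l0|]; [|exact I]. apply lt_tr.
    + destruct hi as [h0|]; [|exact I]. apply (o_trans (omega_pow_ord C HC) hy h2).
    + change (le b (rk (tr l b))). rewrite rk_tr. right; auto.
  - intro H. apply NNPP. intro hn. apply (o_nlt_le HC) in hn.
    assert (Hcore : forall y : omega_pow C, y <> x -> (x <> zero -> lt (pr x) y) -> lt y g0 ->
                    (lt (sc x) g0 -> lt y (sc x)) -> le b (rk y) -> False).
    { intros y k1 k2 k3 k4 k5.
      assert (k6 : lt y (sc x)).
      { destruct (classic (lt (sc x) g0)) as [e|e]; auto.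
        destruct (o_trich (omega_pow_ord C HC) (sc x) g0) as [e'|[e'|e']]; [tauto| |].
        - rewrite e'. auto.
        - apply (o_trans (omega_pow_ord C HC) k3 e'). }
      pose proof (rank_core x y k1 k2 k6) as k7.
      apply (o_le_nlt HC k5). apply (o_lt_le_trans HC k7 hn). }
    destruct (classic (x = zero)) as [hz|hz];
    destruct (classic (lt (sc x) g0)) as [hs|hs].
    + destruct (H None (Some (exist _ (sc x) hs))) as [[y hyg] [k1 [[_ k2] k3]]].
      { split; simpl; auto. apply lt_sc. }
      apply (Hcore y); auto. { intro e; apply k1; apply sig_eq; auto. } tauto.
    + destruct (H None None) as [[y hyg] [k1 [[_ k2] k3]]].
      { split; simpl; auto. }
      apply (Hcore y); auto. { intro e; apply k1; apply sig_eq; auto. } tauto. tauto.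
    + assert (hp : lt (pr x) g0) by (apply (o_trans (omega_pow_ord C HC) (pr_lt x hz) hxg)).
      destruct (H (Some (exist _ (pr x) hp)) (Some (exist _ (sc x) hs))) as [[y hyg] [k1 [[k0 k2] k3]]].
      { split; simpl; [apply pr_lt; auto|apply lt_sc]. }
      apply (Hcore y); auto. intro e; apply k1; apply sig_eq; auto.
    + assert (hp : lt (pr x) g0) by (apply (o_trans (omega_pow_ord C HC) (pr_lt x hz) hxg)).
      destruct (H (Some (exist _ (pr x) hp)) None) as [[y hyg] [k1 [[k0 k2] k3]]].
      { split; simpl; [apply pr_lt; auto|auto]. }
      apply (Hcore y); auto. { intro e; apply k1; apply sig_eq; auto. } tauto.
Qed.

End OPT.

Lemma supp_pull {A B : Type} (phi : A -> B) (Hinj : forall a a', phi a = phi a' -> a = a')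
  (F : B -> nat) : (exists l, forall b, F b <> 0 -> In b l) -> exists l', forall a, F (phi a) <> 0 -> In a l'.
Proof.
  intros [l hl].
  assert (H : forall l : list B, exists l' : list A, forall a, In (phi a) l -> In a l').
  { induction l0 as [|b l0 [l' hl']].
    - exists nil. intros a [].
    - destruct (classic (exists a, phi a = b)) as [[a0 ha0]|hn].
      + exists (a0 :: l'). intros a [e|e]; simpl; auto. left. apply Hinj. congruence.
      + exists l'. intros a [e|e]; auto. exfalso; eauto. }
  destruct (H l) as [l' hl']. exists l'. intros a ha. apply hl', hl, ha.
Qed.

Lemma partition_iso (X : LO) (HX : is_ordinal X) (R A B : X -> Prop) :
  (forall x, R x <-> A x \/ B x) -> (forall x y, A x -> B y -> lt x y) ->
  ord_iso (sub X R) (osum (sub X A) (sub X B)).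
Proof.
  intros hR hAB.
  assert (hB : forall x, R x -> ~ A x -> B x) by (intros x r na; apply hR in r; tauto).
  set (phi := fun x : sub X R =>
    match excluded_middle_informative (A (proj1_sig x)) with
    | left a => inl (exist A (proj1_sig x) a) : osum (sub X A) (sub X B)
    | right na => inr (exist B (proj1_sig x) (hB _ (proj2_sig x) na))
    end).
  apply (@iso_of_surj _ _ (sub_ord R HX) (osum_ord _ _ (sub_ord A HX) (sub_ord B HX)) phi).
  - intros [x rx] [y ry] h. unfold phi. simpl in *.
    destruct (excluded_middle_informative (A x)) as [a|na];
    destruct (excluded_middle_informative (A y)) as [a'|na']; simpl; auto.
    apply (o_asym HX h). apply hAB; auto.
  - intros [[x ax]|[x bx]].
    + assert (rx : R x) by (apply hR; auto). exists (exist _ x rx). unfold phi. simpl.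
      destruct (excluded_middle_informative (A x)) as [a|na]; [|exfalso; apply na; exact ax].
      f_equal. apply sig_eq. reflexivity.
    + assert (rx : R x) by (apply hR; auto). exists (exist _ x rx). unfold phi. simpl.
      destruct (excluded_middle_informative (A x)) as [a|na].
      * exfalso. apply (o_irr HX x). apply hAB; [exact a|exact bx].
      * f_equal. apply sig_eq. reflexivity.
Qed.

Lemma sub_ext_iso (X : LO) (HX : is_ordinal X) (P Q : X -> Prop) :
  (forall x, P x <-> Q x) -> ord_iso (sub X P) (sub X Q).
Proof.
  intros e.
  apply (@iso_of_surj _ _ (sub_ord P HX) (sub_ord Q HX)
           (fun x => exist Q (proj1_sig x) (proj1 (e _) (proj2_sig x)))).
  - intros [x px] [y py] h. exact h.
  - intros [y qy]. exists (exist P y (proj2 (e y) qy)). apply sig_eq. reflexivity.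
Qed.

Lemma op_iso (A A' : LO) (HA : is_ordinal A) (HA' : is_ordinal A') :
  ord_iso A A' -> ord_iso (omega_pow A) (omega_pow A').
Proof.
  intros [f [g [gf [fg mono]]]].
  assert (sp : forall F : omega_pow A, exists l, forall y, ev A F (g y) <> 0 -> In y l).
  { intro F. destruct (op_supp A F) as [l hl]. exists (map f l). intros y hy.
    rewrite <- (fg y). apply in_map. auto. }
  assert (sp' : forall G : omega_pow A', exists l, forall x, ev A' G (f x) <> 0 -> In x l).
  { intro G. destruct (op_supp A' G) as [l hl]. exists (map g l). intros x hx.
    rewrite <- (gf x). apply in_map. auto. }
  set (phi := fun F : omega_pow A => mk A' (fun y => ev A F (g y)) (sp F) : omega_pow A').
  apply (@iso_of_surj _ _ (omega_pow_ord A HA) (omega_pow_ord A' HA') phi).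
  - intros F G h. destruct (op_lt_e A _ _ h) as [w [h1 h2]].
    apply (op_lt_i A' _ _ (f w)).
    + unfold phi. rewrite !ev_mk, gf. auto.
    + intros y hy. unfold phi. rewrite !ev_mk. apply h2.
      apply (proj2 (mono w (g y))). rewrite fg. auto.
  - intro G. exists (mk A (fun x => ev A' G (f x)) (sp' G)). apply op_eq. intro y.
    unfold phi. rewrite !ev_mk, fg. auto.
Qed.

Lemma mul_iso (L L' : LO) k : ord_iso L L' -> ord_iso (mul_nat L k) (mul_nat L' k).
Proof.
  intros [f [g [gf [fg mono]]]].
  exists (fun p : mul_nat L k => (fst p, f (snd p)) : mul_nat L' k).
  exists (fun p : mul_nat L' k => (fst p, g (snd p)) : mul_nat L k).
  split; [|split].
  - intros [i x]; simpl. rewrite gf; auto.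
  - intros [i x]; simpl. rewrite fg; auto.
  - intros [i x] [j y]; simpl. rewrite (mono x y). tauto.
Qed.

Lemma succ_iso (L L' : LO) : ord_iso L L' -> ord_iso (succ L) (succ L').
Proof.
  intros [f [g [gf [fg mono]]]].
  exists (fun p : succ L => option_map f p : succ L').
  exists (fun p : succ L' => option_map g p : succ L).
  split; [|split].
  - intros [x|]; simpl; auto. rewrite gf; auto.
  - intros [x|]; simpl; auto. rewrite fg; auto.
  - intros [x|] [y|]; simpl; try tauto. apply mono.
Qed.

Section EX.
Variable C : LO.
Hypothesis HC : is_ordinal C.
Let HO := omega_pow_ord C HC.

Definition ext (b : C) (f : omega_pow (segment C b)) : C -> nat :=
  fun y => match excluded_middle_informative (lt y b) with
           | left p => ev (segment C b) f (exist _ y p)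
           | right _ => 0 end.

Lemma ext_supp b f : exists l, forall y, ext b f y <> 0 -> In y l.
Proof.
  destruct (op_supp _ f) as [l hl]. exists (map (@proj1_sig _ _) l). intros y hy.
  unfold ext in hy. destruct (excluded_middle_informative (lt y b)) as [p|np]; [|lia].
  apply hl in hy. apply (in_map (@proj1_sig _ _)) in hy. exact hy.
Qed.

Definition extO b f : omega_pow C := mk C (ext b f) (ext_supp b f).

Lemma ev_extO_lt b f y (p : lt y b) : ev C (extO b f) y = ev _ f (exist _ y p).
Proof.
  unfold extO. rewrite ev_mk. unfold ext.
  destruct (excluded_middle_informative (lt y b)) as [p'|np]; [|tauto].
  f_equal. apply sig_eq. reflexivity.
Qed.

Lemma ev_extO_nlt b f y : ~ lt y b -> ev C (extO b f) y = 0.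
Proof.
  intro h. unfold extO. rewrite ev_mk. unfold ext.
  destruct (excluded_middle_informative (lt y b)) as [p'|np]; tauto.
Qed.

Lemma res_supp b (F : omega_pow C) :
  exists l, forall a : segment C b, ev C F (proj1_sig a) <> 0 -> In a l.
Proof.
  apply (supp_pull (@proj1_sig _ _) (fun a a' e => sig_eq a a' e) (ev C F)). apply op_supp.
Qed.

Definition res b (F : omega_pow C) : omega_pow (segment C b) :=
  mk (segment C b) (fun a => ev C F (proj1_sig a)) (res_supp b F).

Lemma ev_res b F a : ev _ (res b F) a = ev C F (proj1_sig a).
Proof. reflexivity. Qed.

Definition Phi (b a : C) (i : nat) (f : omega_pow (segment C b)) : omega_pow C := upd C (extO b f) a i.

Lemma ev_ee a n y : ev C (ee C a n) y = if dec (y = a) then n else 0.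
Proof. unfold ee. rewrite ev_upd. reflexivity. Qed.
Lemma ev_ee_eq a n : ev C (ee C a n) a = n.
Proof. rewrite ev_ee, dec_t; auto. Qed.
Lemma ev_ee_ne a n y : y <> a -> ev C (ee C a n) y = 0.
Proof. intro h. rewrite ev_ee, dec_f; auto. Qed.

Lemma lt_ne (x y : C) : lt x y -> y <> x.
Proof. intros h e; subst; apply (o_irr HC _ h). Qed.
Lemma lt_ne' (x y : C) : lt x y -> x <> y.
Proof. intros h e; subst; apply (o_irr HC _ h). Qed.

Lemma Phi_above b a i f y : le b a -> lt a y -> ev C (Phi b a i f) y = 0.
Proof.
  intros hb hy. unfold Phi. rewrite ev_upd_ne by (apply lt_ne; auto).
  apply ev_extO_nlt. intro h. apply (o_asym HC hy). apply (o_lt_le_trans HC h hb).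
Qed.

Lemma Phi_at b a i f : ev C (Phi b a i f) a = i.
Proof. unfold Phi. apply ev_upd_eq. Qed.

Lemma Phi_lt_ee a i k f : i < k -> lt (Phi a a i f) (ee C a k).
Proof.
  intro h. apply (op_lt_i C _ _ a).
  - rewrite Phi_at, ev_ee_eq. auto.
  - intros y hy. rewrite Phi_above, ev_ee_ne; auto. apply lt_ne; auto. right; auto.
Qed.

Lemma Phi_mono_i b a i j f g : le b a -> i < j -> lt (Phi b a i f) (Phi b a j g).
Proof.
  intros hb h. apply (op_lt_i C _ _ a).
  - rewrite !Phi_at. auto.
  - intros y hy. rewrite !Phi_above; auto.
Qed.

Lemma Phi_mono_f b a i f g : le b a -> lt f g -> lt (Phi b a i f) (Phi b a i g).
Proof.
  intros hb h. destruct (op_lt_e _ _ _ h) as [[p hp] [h1 h2]].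
  assert (hpa : p <> a) by (apply lt_ne'; apply (o_lt_le_trans HC hp hb)).
  apply (op_lt_i C _ _ p).
  - unfold Phi. rewrite !ev_upd_ne by auto. rewrite !(ev_extO_lt b _ p hp). auto.
  - intros y hy. unfold Phi. rewrite !ev_upd.
    destruct (dec (y = a)); auto.
    destruct (classic (lt y b)) as [hyb|hyb].
    + rewrite !(ev_extO_lt b _ y hyb). apply h2. exact hy.
    + rewrite !ev_extO_nlt; auto.
Qed.

Lemma lt_witness_nz (F G : omega_pow C) : lt F G -> exists w, ev C G w <> 0 /\ ev C F w < ev C G w /\ forall y, lt w y -> ev C F y = ev C G y.
Proof. intro h. destruct (op_lt_e _ _ _ h) as [w [h1 h2]]. exists w. split; [lia|]. auto. Qed.

Lemma below_ee (F : omega_pow C) a n : lt F (ee C a n) -> (forall y, lt a y -> ev C F y = 0) /\ ev C F a < n.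
Proof.
  intro h. destruct (lt_witness_nz _ _ h) as [w [h0 [h1 h2]]].
  assert (w = a). { apply NNPP. intro e. rewrite ev_ee_ne in h0; auto. }
  subst w. rewrite ev_ee_eq in h1. split; auto.
  intros y hy. rewrite h2, ev_ee_ne; auto. apply lt_ne; auto.
Qed.

Lemma Phi_res a (F : omega_pow C) : (forall y, lt a y -> ev C F y = 0) -> Phi a a (ev C F a) (res a F) = F.
Proof.
  intros h. apply op_eq. intro y. unfold Phi. rewrite ev_upd.
  destruct (dec_spec (y = a)) as [[e1 e2]|[e1 e2]]; rewrite e2; [subst; auto|].
  destruct (classic (lt y a)) as [hy|hy].
  - rewrite (ev_extO_lt a _ y hy). rewrite ev_res. reflexivity.
  - rewrite ev_extO_nlt; auto. symmetry. apply h.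
    destruct (o_trich HC a y) as [q|[q|q]]; auto; [congruence|tauto].
Qed.

Theorem Oa (a : C) (k : nat) :
  ord_iso (mul_nat (omega_pow (segment C a)) k) (segment (omega_pow C) (ee C a k)).
Proof.
  set (phi := fun p : mul_nat (omega_pow (segment C a)) k =>
     exist (fun F => lt F (ee C a k)) (Phi a a (proj1_sig (fst p)) (snd p))
           (Phi_lt_ee a _ k (snd p) (proj2_sig (fst p))) : segment (omega_pow C) (ee C a k)).
  apply (@iso_of_surj _ _ (mul_nat_ord _ k (omega_pow_ord _ (segment_ord a HC)))
                       (segment_ord _ HO) phi).
  - intros [[i pi] f] [[j pj] g]. simpl. intros [h|[h1 h2]].
    + apply Phi_mono_i; auto. right; auto.
    + subst j. apply Phi_mono_f; auto. right; auto.
  - intros [F hF]. destruct (below_ee F a k hF) as [h1 h2].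
    exists (exist (fun i => i < k) (ev C F a) h2, res a F). apply sig_eq. simpl.
    apply Phi_res; auto.
Qed.


Lemma ev_g1 a k m y : ev C (upd C (ee C a k) m 1) y = if dec (y = m) then 1 else ev C (ee C a k) y.
Proof. apply ev_upd. Qed.

Lemma Phi_lt_g1 a m i k f : lt m a -> i < k -> lt (Phi a a i f) (upd C (ee C a k) m 1).
Proof.
  intros hm h. apply (op_lt_i C _ _ a).
  - rewrite Phi_at, ev_upd_ne, ev_ee_eq by (apply lt_ne; auto). auto.
  - intros y hy. rewrite Phi_above; [|right; auto|auto].
    rewrite ev_upd_ne, ev_ee_ne; auto. apply lt_ne; auto. apply lt_ne. apply (o_trans HC hm hy).
Qed.

Lemma ee_lt_g1 a m k : lt m a -> lt (ee C a k) (upd C (ee C a k) m 1).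
Proof.
  intros hm. apply (op_lt_i C _ _ m).
  - rewrite ev_upd_eq, ev_ee_ne by (apply lt_ne'; auto). auto.
  - intros y hy. rewrite ev_upd_ne; auto. apply lt_ne; auto.
Qed.

Lemma g1_nz a m k w : lt m a -> ev C (upd C (ee C a k) m 1) w <> 0 -> w = m \/ w = a.
Proof.
  intros hm h. rewrite ev_g1 in h. destruct (dec_spec (w = m)) as [[e1 e2]|[e1 e2]]; auto.
  rewrite e2 in h. right. apply NNPP. intro e. rewrite ev_ee_ne in h; auto.
Qed.

Theorem Ob (a c0 : C) (k : nat) (hc : lt c0 a) (Hc0 : forall y, le c0 y) :
  ord_iso (succ (mul_nat (omega_pow (segment C a)) k)) (segment (omega_pow C) (upd C (ee C a k) c0 1)).
Proof.
  set (g1 := upd C (ee C a k) c0 1).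
  set (phi := fun p : succ (mul_nat (omega_pow (segment C a)) k) =>
     match p with
     | Some q => exist (fun F => lt F g1) (Phi a a (proj1_sig (fst q)) (snd q))
                       (Phi_lt_g1 a c0 _ k (snd q) hc (proj2_sig (fst q)))
     | None => exist (fun F => lt F g1) (ee C a k) (ee_lt_g1 a c0 k hc)
     end : segment (omega_pow C) g1).
  apply (@iso_of_surj _ _ (succ_ord _ (mul_nat_ord _ k (omega_pow_ord _ (segment_ord a HC))))
                       (segment_ord _ HO) phi).
  - intros [[[i pi] f]|] [[[j pj] g]|]; simpl; try tauto.
    + intros [h|[h1 h2]].
      * apply Phi_mono_i; auto. right; auto.
      * subst j. apply Phi_mono_f; auto. right; auto.
    + intros _. apply Phi_lt_ee; auto.
  - intros [F hF]. destruct (lt_witness_nz _ _ hF) as [w [h0 [h1 h2]]].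
    destruct (g1_nz a c0 k w hc h0) as [e|e]; subst w.
    + exists None. apply sig_eq. simpl. apply op_eq. intro y.
      destruct (classic (y = c0)) as [e|e].
      * subst y. rewrite ev_ee_ne by (apply lt_ne'; auto). unfold g1 in h1. rewrite ev_upd_eq in h1. lia.
      * rewrite h2. { unfold g1. rewrite ev_upd_ne; auto. }
        destruct (Hc0 y); auto. congruence.
    + assert (ha : forall y, lt a y -> ev C F y = 0).
      { intros y hy. rewrite h2 by auto. unfold g1. rewrite ev_upd_ne, ev_ee_ne; auto.
        - apply lt_ne; auto.
        - apply lt_ne. apply (o_trans HC hc hy). }
      assert (hk : ev C F a < k).
      { unfold g1 in h1. rewrite ev_upd_ne, ev_ee_eq in h1; auto. apply lt_ne; auto. }
      exists (Some (exist (fun i => i < k) (ev C F a) hk, res a F)). apply sig_eq. simpl.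
      apply Phi_res; auto.
Qed.

Lemma Phim_lt_g1 a m k g : lt m a -> lt (Phi m a k g) (upd C (ee C a k) m 1).
Proof.
  intros hm. apply (op_lt_i C _ _ m).
  - unfold Phi. rewrite ev_upd_ne by (apply lt_ne'; auto). rewrite ev_extO_nlt by (apply (o_irr HC)).
    rewrite ev_upd_eq. auto.
  - intros y hy. unfold Phi. rewrite !ev_upd.
    destruct (dec_spec (y = a)) as [[e1 e2]|[e1 e2]]; rewrite e2.
    + rewrite dec_f by (apply lt_ne; auto). subst; rewrite ev_ee_eq; auto.
    + rewrite dec_f by (apply lt_ne; auto). rewrite ev_ee_ne, ev_extO_nlt; auto. apply (o_asym HC hy).
Qed.

Theorem Oc (a m : C) (k : nat) (hm : lt m a) :
  ord_iso (osum (mul_nat (omega_pow (segment C a)) k) (omega_pow (segment C m)))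
          (segment (omega_pow C) (upd C (ee C a k) m 1)).
Proof.
  set (g1 := upd C (ee C a k) m 1).
  set (phi := fun p : osum (mul_nat (omega_pow (segment C a)) k) (omega_pow (segment C m)) =>
     match p with
     | inl q => exist (fun F => lt F g1) (Phi a a (proj1_sig (fst q)) (snd q))
                       (Phi_lt_g1 a m _ k (snd q) hm (proj2_sig (fst q)))
     | inr g => exist (fun F => lt F g1) (Phi m a k g) (Phim_lt_g1 a m k g hm)
     end : segment (omega_pow C) g1).
  apply (@iso_of_surj _ _ (osum_ord _ _ (mul_nat_ord _ k (omega_pow_ord _ (segment_ord a HC)))
                                  (omega_pow_ord _ (segment_ord m HC)))
                       (segment_ord _ HO) phi).
  - intros [[[i pi] f]|g] [[[j pj] g']|g']; simpl; try tauto.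
    + intros [h|[h1 h2]].
      * apply Phi_mono_i; auto. right; auto.
      * subst j. apply Phi_mono_f; auto. right; auto.
    + intros _. apply (op_lt_i C (Phi a a i f) (Phi m a k g') a).
      * rewrite !Phi_at. auto.
      * intros y hy. rewrite (Phi_above a a i f y (or_intror eq_refl) hy), (Phi_above m a k g' y (or_introl hm) hy). auto.
    + intros h. apply Phi_mono_f; auto. left; auto.
  - intros [F hF]. destruct (lt_witness_nz _ _ hF) as [w [h0 [h1 h2]]].
    destruct (g1_nz a m k w hm h0) as [e|e]; subst w.
    + exists (inr (res m F)). apply sig_eq. simpl. apply op_eq. intro y.
      unfold Phi. rewrite ev_upd.
      destruct (dec_spec (y = a)) as [[e1 e2]|[e1 e2]]; rewrite e2.
      * subst y. rewrite h2 by auto. unfold g1. rewrite ev_upd_ne, ev_ee_eq; auto. apply lt_ne; auto.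
      * destruct (o_trich HC y m) as [q|[q|q]].
        -- rewrite (ev_extO_lt m _ y q). rewrite ev_res. reflexivity.
        -- subst y. rewrite ev_extO_nlt by (apply (o_irr HC)). unfold g1 in h1. rewrite ev_upd_eq in h1. lia.
        -- rewrite ev_extO_nlt by (apply (o_asym HC q)). rewrite h2 by auto. unfold g1.
           rewrite ev_upd_ne, ev_ee_ne; auto. apply lt_ne; auto.
    + assert (ha : forall y, lt a y -> ev C F y = 0).
      { intros y hy. rewrite h2 by auto. unfold g1. rewrite ev_upd_ne, ev_ee_ne; auto.
        - apply lt_ne; auto.
        - apply lt_ne. apply (o_trans HC hm hy). }
      assert (hk : ev C F a < k).
      { unfold g1 in h1. rewrite ev_upd_ne, ev_ee_eq in h1; auto. apply lt_ne; auto. }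
      exists (inl (exist (fun i => i < k) (ev C F a) hk, res a F)). apply sig_eq. simpl.
      apply Phi_res; auto.
Qed.

End EX.

Section BT.
Variable C : LO.
Hypothesis HC : is_ordinal C.
Let HO := omega_pow_ord C HC.

Lemma between_char (u v f : omega_pow C) (m : C) :
  (forall d, lt d m -> ev C u d = 0) -> ev C v m = ev C u m + 1 -> (forall y, y <> m -> ev C v y = ev C u y) ->
  (lt u f /\ lt f v <-> (forall y, le m y -> ev C f y = ev C u y) /\ exists q, lt q m /\ ev C f q <> 0).
Proof.
  intros hu hvm hv. split.
  - intros [h1 h2]. destruct (op_lt_e _ _ _ h1) as [q [hq1 hq2]]. destruct (op_lt_e _ _ _ h2) as [p [hp1 hp2]].
    assert (hpm : p = m).
    { destruct (o_trich HC p m) as [a1|[a1|a1]]; auto.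
      - pose proof (hv p (lt_ne' C HC _ _ a1)) as e1. pose proof (hu p a1) as e2. lia.
      - exfalso. pose proof (hv p (lt_ne C HC _ _ a1)) as e1.
        destruct (o_trich HC q p) as [a2|[a2|a2]].
        + pose proof (hq2 p a2). lia.
        + subst q. lia.
        + pose proof (hp2 q a2). pose proof (hv q (lt_ne C HC _ _ (o_trans HC a1 a2))). lia. }
    subst p.
    assert (hqm : lt q m).
    { destruct (o_trich HC q m) as [a1|[a1|a1]]; auto.
      - subst q. exfalso. lia.
      - exfalso. pose proof (hp2 q a1). pose proof (hv q (lt_ne C HC _ _ a1)). lia. }
    split.
    + intros y [hy|hy].
      * rewrite hp2 by auto. apply hv. apply (lt_ne C HC _ _ hy).
      * subst y. symmetry. apply hq2. auto.
    + exists q. split; auto. lia.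
  - intros [h1 [q [hq1 hq2]]]. split.
    + assert (hne : u <> f). { intro e; subst. rewrite hu in hq2; auto. }
      destruct (op_diff_max _ HC _ _ hne) as [p [hp1 hp2]].
      apply (op_lt_i C _ _ p); auto.
      assert (hpm : lt p m).
      { destruct (o_trich HC p m) as [a1|[a1|a1]]; auto.
        - subst. exfalso. apply hp1. symmetry. apply h1. right; auto.
        - exfalso. apply hp1. symmetry. apply h1. left; auto. }
      rewrite hu in hp1 |- *; auto. lia.
    + apply (op_lt_i C _ _ m).
      * rewrite h1, hvm by (right; auto). lia.
      * intros y hy. rewrite h1 by (left; auto). rewrite hv; auto. apply (lt_ne C HC _ _ hy).
Qed.

Definition mixv (m : C) (f u : omega_pow C) : C -> nat := fun y => if dec (lt y m) then ev C f y else ev C u y.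
Lemma mix_supp m f u : exists l, forall y, mixv m f u y <> 0 -> In y l.
Proof. apply (supp2 C f u _ nil). intro y. unfold mixv. destruct (dec (lt y m)); auto. Qed.
Definition mix m f u : omega_pow C := mk C (mixv m f u) (mix_supp m f u).

Lemma between_iso (u1 v1 u2 v2 : omega_pow C) (m : C) :
  (forall d, lt d m -> ev C u1 d = 0) -> ev C v1 m = ev C u1 m + 1 -> (forall y, y <> m -> ev C v1 y = ev C u1 y) ->
  (forall d, lt d m -> ev C u2 d = 0) -> ev C v2 m = ev C u2 m + 1 -> (forall y, y <> m -> ev C v2 y = ev C u2 y) ->
  ord_iso (sub (omega_pow C) (fun f => lt u1 f /\ lt f v1)) (sub (omega_pow C) (fun f => lt u2 f /\ lt f v2)).
Proof.
  intros a1 a2 a3 b1 b2 b3.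
  pose proof (between_char u1 v1) as B1. pose proof (between_char u2 v2) as B2.
  assert (hmix : forall (ua va ub vb f : omega_pow C),
     (forall d, lt d m -> ev C ua d = 0) -> ev C va m = ev C ua m + 1 -> (forall y, y <> m -> ev C va y = ev C ua y) ->
     (forall d, lt d m -> ev C ub d = 0) -> ev C vb m = ev C ub m + 1 -> (forall y, y <> m -> ev C vb y = ev C ub y) ->
     lt ua f /\ lt f va -> lt ub (mix m f ub) /\ lt (mix m f ub) vb).
  { intros ua va ub vb f c1 c2 c3 d1 d2 d3 hf.
    apply (between_char ub vb (mix m f ub) m d1 d2 d3).
    apply (between_char ua va f m c1 c2 c3) in hf. destruct hf as [k1 [q [k2 k3]]].
    split.
    - intros y hy. unfold mix. rewrite ev_mk. unfold mixv. rewrite dec_f; auto. apply (o_le_nlt HC hy).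
    - exists q. split; auto. unfold mix. rewrite ev_mk. unfold mixv. rewrite dec_t; auto. }
  set (phi := fun x : sub (omega_pow C) (fun f => lt u1 f /\ lt f v1) =>
     exist (fun f => lt u2 f /\ lt f v2) (mix m (proj1_sig x) u2)
       (hmix u1 v1 u2 v2 (proj1_sig x) a1 a2 a3 b1 b2 b3 (proj2_sig x))).
  apply (@iso_of_surj _ _ (sub_ord _ HO) (sub_ord _ HO) phi).
  - intros [f1 hf1] [f2 hf2] h. change (lt (mix m f1 u2) (mix m f2 u2)).
    change (lt f1 f2) in h.
    apply (between_char u1 v1 f1 m a1 a2 a3) in hf1. apply (between_char u1 v1 f2 m a1 a2 a3) in hf2.
    destruct hf1 as [k1 _], hf2 as [k2 _].
    destruct (op_lt_e _ _ _ h) as [p [hp1 hp2]].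
    assert (hpm : lt p m).
    { apply NNPP. intro e. apply (o_nlt_le HC) in e. rewrite k1, k2 in hp1; auto. lia. }
    apply (op_lt_i C _ _ p).
    + unfold mix. rewrite !ev_mk. unfold mixv. rewrite !dec_t; auto.
    + intros y hy. unfold mix. rewrite !ev_mk. unfold mixv. destruct (dec (lt y m)); auto.
  - intros [F hF].
    exists (exist _ (mix m F u1) (hmix u2 v2 u1 v1 F b1 b2 b3 a1 a2 a3 hF)). apply sig_eq. simpl.
    apply (between_char u2 v2 F m b1 b2 b3) in hF. destruct hF as [k1 _].
    apply op_eq. intro y. unfold mix. rewrite !ev_mk. unfold mixv.
    destruct (dec_spec (lt y m)) as [[e1 e2]|[e1 e2]]; rewrite e2.
    + rewrite ev_mk. unfold mixv. rewrite e2. auto.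
    + symmetry. apply k1. apply (o_nlt_le HC e1).
Qed.

End BT.

Section SH.
Variable C : LO.
Hypothesis HC : is_ordinal C.
Let HO := omega_pow_ord C HC.
Variable t : C.
Variable n : nat.

Definition lowt (p : omega_pow C) := forall z, lt t z -> ev C p z = 0.

Definition shv (p : omega_pow C) : C -> nat :=
  fun y => if dec (lowt p) then (if dec (y = t) then ev C p t + n else ev C p y) else ev C p y.
Lemma sh_supp p : exists l, forall y, shv p y <> 0 -> In y l.
Proof.
  apply (supp2 C p p _ [t]). intro y. unfold shv.
  destruct (dec (lowt p)); auto. destruct (dec_spec (y = t)) as [[e1 e2]|[e1 e2]]; rewrite e2; auto.
  subst; simpl; auto.
Qed.
Definition sh p : omega_pow C := mk C (shv p) (sh_supp p).

Lemma sh_low p y : lowt p -> ev C (sh p) y = if dec (y = t) then ev C p t + n else ev C p y.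
Proof. intro h. unfold sh. rewrite ev_mk. unfold shv. rewrite dec_t; auto. Qed.
Lemma sh_nlow p : ~ lowt p -> sh p = p.
Proof. intro h. apply op_eq. intro y. unfold sh. rewrite ev_mk. unfold shv. rewrite dec_f; auto. Qed.

Lemma low_lt (u p : omega_pow C) : lowt u -> ~ lowt p -> lt u p.
Proof.
  intros hu hp. destruct (o_trich HO u p) as [e|[e|e]]; auto; exfalso.
  - subst. auto.
  - apply hp. destruct (op_lt_e _ _ _ e) as [w [h1 h2]]. intros z hz.
    assert (hw : ~ lt t w). { intro h. rewrite hu in h1; auto. lia. }
    rewrite h2, hu; auto.
    destruct (o_trich HC w z) as [q|[q|q]]; auto.
    + subst; tauto.
    + exfalso. apply hw. apply (o_trans HC hz q).
Qed.

Lemma sh_lowt p : lowt p -> lowt (sh p).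
Proof. intros h z hz. rewrite sh_low, dec_f; auto. apply (lt_ne C HC _ _ hz). Qed.

Lemma sh_mono : smono sh.
Proof.
  intros p1 p2 h. destruct (classic (lowt p1)) as [l1|l1]; destruct (classic (lowt p2)) as [l2|l2].
  - destruct (op_lt_e _ _ _ h) as [w [h1 h2]]. apply (op_lt_i C _ _ w).
    + rewrite !sh_low; auto. destruct (dec_spec (w = t)) as [[e1 e2]|[e1 e2]]; rewrite e2; [subst|]; lia.
    + intros y hy. rewrite !sh_low; auto. destruct (dec_spec (y = t)) as [[e1 e2]|[e1 e2]]; rewrite e2; [subst; rewrite h2; auto|auto].
  - apply low_lt; auto. apply sh_lowt; auto. rewrite sh_nlow; auto.
  - exfalso. apply (o_asym HO h). apply low_lt; auto.
  - rewrite !sh_nlow; auto.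
Qed.

Lemma sh_big (u p : omega_pow C) : lowt u -> n = ev C u t + 1 -> lt u (sh p).
Proof.
  intros hu hn. destruct (classic (lowt p)) as [l|l].
  - apply (op_lt_i C _ _ t).
    + rewrite sh_low, dec_t; auto. lia.
    + intros y hy. rewrite sh_low, dec_f, hu, l; auto. apply (lt_ne C HC _ _ hy).
  - rewrite sh_nlow; auto. apply low_lt; auto.
Qed.

Lemma sh_le_ee (p : omega_pow C) a k : lt t a -> 1 <= k -> le p (ee C a k) -> le (sh p) (ee C a k).
Proof.
  intros hta hk hp. destruct (classic (lowt p)) as [l|l].
  - left. apply (op_lt_i C _ _ a).
    + rewrite (sh_low p a l), (dec_f (a = t) (lt_ne C HC _ _ hta)), (l a hta), ev_ee_eq. lia.
    + intros y hy. assert (hty : lt t y) by (apply (o_trans HC hta hy)).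
      rewrite (sh_low p y l), (dec_f (y = t) (lt_ne C HC _ _ hty)), (l y hty).
      rewrite ev_ee_ne; auto. apply (lt_ne C HC _ _ hy).
  - rewrite sh_nlow; auto.
Qed.

End SH.

Section HH.
Variable C : LO.
Hypothesis HC : is_ordinal C.
Let HO := omega_pow_ord C HC.
Variable g0 : omega_pow C.
Variables a m : C.
Variable k : nat.
Hypothesis ha : forall y, lt a y -> ev C g0 y = 0.
Hypothesis hk : ev C g0 a = k.
Hypothesis hk1 : 1 <= k.
Hypothesis hm1 : ev C g0 m <> 0.
Hypothesis hm2 : forall d, lt d m -> ev C g0 d = 0.
Hypothesis hma : lt m a.

Definition EE := ee C a k.
Definition hh0 := upd C g0 m (ev C g0 m - 1).
Definition gg1 := upd C EE m 1.

Lemma hh_m : ev C hh0 m = ev C g0 m - 1.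
Proof. apply ev_upd_eq. Qed.
Lemma hh_ne y : y <> m -> ev C hh0 y = ev C g0 y.
Proof. apply ev_upd_ne. Qed.
Lemma hh_below d : lt d m -> ev C hh0 d = 0.
Proof. intro h. rewrite hh_ne; auto. apply (lt_ne' C HC _ _ h). Qed.
Lemma hh_a : ev C hh0 a = k.
Proof. rewrite hh_ne; auto. apply (lt_ne C HC _ _ hma). Qed.
Lemma hh_above y : lt a y -> ev C hh0 y = 0.
Proof. intro h. rewrite hh_ne; auto. apply (lt_ne C HC _ _ (o_trans HC hma h)). Qed.
Lemma EE_below d : lt d m -> ev C EE d = 0.
Proof. intro h. unfold EE. rewrite ev_ee_ne; auto. apply (lt_ne' C HC _ _ (o_trans HC h hma)). Qed.
Lemma EE_m : ev C EE m = 0.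
Proof. unfold EE. rewrite ev_ee_ne; auto. apply (lt_ne' C HC _ _ hma). Qed.

Lemma hh_lt_g0 : lt hh0 g0.
Proof.
  apply (op_lt_i C _ _ m).
  - rewrite hh_m. lia.
  - intros y hy. apply hh_ne. apply (lt_ne C HC _ _ hy).
Qed.

Lemma EE_le_hh : le EE hh0.
Proof.
  apply (o_nlt_le HO). intro h. apply below_ee in h; auto. destruct h as [_ h]. rewrite hh_a in h. lia.
Qed.

Lemma EE_lt_g1 : lt EE gg1.
Proof. apply (ee_lt_g1 C HC a m k hma). Qed.

Definition PP := sub (omega_pow C) (fun f => le f EE).
Definition QQ := sub (omega_pow C) (fun f => lt EE f /\ le f hh0).
Definition TT := sub (omega_pow C) (fun f => lt hh0 f /\ lt f g0).
Definition TT1 := sub (omega_pow C) (fun f => lt EE f /\ lt f gg1).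

Lemma part1 : ord_iso (segment (omega_pow C) g0) (osum (sub (omega_pow C) (fun f => le f hh0)) TT).
Proof.
  apply (partition_iso (omega_pow C) HO (fun f => lt f g0)).
  - intro f. split.
    + intro h. destruct (o_trich HO f hh0) as [e|[e|e]]; [left; left|left; right|right]; auto.
    + intros [e|[e1 e2]]; auto. apply (o_le_lt_trans HO e hh_lt_g0).
  - intros x y hx [hy _]. apply (o_le_lt_trans HO hx hy).
Qed.

Lemma part2 : ord_iso (sub (omega_pow C) (fun f => le f hh0)) (osum PP QQ).
Proof.
  apply (partition_iso (omega_pow C) HO).
  - intro f. split.
    + intro h. destruct (o_trich HO f EE) as [e|[e|e]]; [left; left|left; right|right]; auto.
    + intros [e|[e1 e2]]; auto. apply (o_le_trans HO e EE_le_hh).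
  - intros x y hx [hy _]. apply (o_le_lt_trans HO hx hy).
Qed.

Lemma part3 : ord_iso (segment (omega_pow C) gg1) (osum PP TT1).
Proof.
  apply (partition_iso (omega_pow C) HO (fun f => lt f gg1)).
  - intro f. split.
    + intro h. destruct (o_trich HO f EE) as [e|[e|e]]; [left; left|left; right|right]; auto.
    + intros [e|[e1 e2]]; auto. apply (o_le_lt_trans HO e EE_lt_g1).
  - intros x y hx [hy _]. apply (o_le_lt_trans HO hx hy).
Qed.

Lemma TT_iso : ord_iso TT TT1.
Proof.
  apply (between_iso C HC hh0 g0 EE gg1 m).
  - apply hh_below.
  - rewrite hh_m. lia.
  - intros y hy. rewrite hh_ne; auto.
  - apply EE_below.
  - unfold gg1. rewrite ev_upd_eq, EE_m. auto.
  - intros y hy. unfold gg1. rewrite ev_upd_ne; auto.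
Qed.

Lemma Qfacts (q : omega_pow C) : lt EE q -> le q hh0 -> (forall y, lt a y -> ev C q y = 0) /\ ev C q a = k.
Proof.
  intros h1 h2.
  assert (za : forall y, lt a y -> ev C q y = 0).
  { intros y hy. destruct h2 as [h2|h2]; [|subst; apply hh_above; auto].
    destruct (op_lt_e _ _ _ h2) as [w [k1 k2]].
    assert (hw : ~ lt a w). { intro e. rewrite hh_above in k1; auto. lia. }
    rewrite k2. { apply hh_above; auto. }
    destruct (o_trich HC w y) as [e|[e|e]]; auto; [subst; tauto|].
    exfalso. apply hw. apply (o_trans HC hy e). }
  assert (qa : ev C q a <= k).
  { destruct h2 as [h2|h2]; [|subst; rewrite hh_a; auto].
    destruct (op_lt_e _ _ _ h2) as [w [k1 k2]].
    destruct (o_trich HC w a) as [e|[e|e]].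
    - rewrite k2, hh_a; auto.
    - subst. rewrite hh_a in k1. lia.
    - rewrite hh_above in k1; auto. lia. }
  split; auto.
  destruct (op_lt_e _ _ _ h1) as [w [k1 k2]].
  destruct (o_trich HC w a) as [e|[e|e]].
  - rewrite <- k2 by auto. unfold EE. apply ev_ee_eq.
  - subst. unfold EE in k1. rewrite ev_ee_eq in k1. lia.
  - rewrite za in k1; auto. lia.
Qed.

Lemma cut_mono2 (q1 q2 : omega_pow C) : (forall y, lt a y -> ev C q1 y = 0) -> (forall y, lt a y -> ev C q2 y = 0) ->
  ev C q1 a = ev C q2 a -> lt q1 q2 -> lt (cut C q1 a) (cut C q2 a).
Proof.
  intros z1 z2 e h. destruct (op_lt_e _ _ _ h) as [w [k1 k2]].
  assert (hw : lt w a).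
  { destruct (o_trich HC w a) as [q|[q|q]]; auto; exfalso.
    - subst. lia.
    - rewrite z1, z2 in k1; auto. lia. }
  apply (op_lt_i C _ _ w).
  - rewrite !ev_cut, dec_t; auto.
  - intros y hy. rewrite !ev_cut. destruct (dec (lt y a)); auto.
Qed.

Lemma cut_lt_EE (q : omega_pow C) : lt (cut C q a) EE.
Proof.
  apply (op_lt_i C _ _ a).
  - rewrite ev_cut, dec_f by (apply (o_irr HC)). unfold EE. rewrite ev_ee_eq. lia.
  - intros y hy. rewrite ev_cut, dec_f by (apply (o_asym HC hy)). unfold EE. rewrite ev_ee_ne; auto.
    apply (lt_ne C HC _ _ hy).
Qed.

Lemma stepD : ord_iso (osum QQ PP) PP.
Proof.
  assert (HP : is_ordinal PP) by apply (sub_ord _ HO).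
  assert (HQ : is_ordinal QQ) by apply (sub_ord _ HO).
  assert (HQP : is_ordinal (osum QQ PP)) by (apply osum_ord; auto).
  destruct (classic (exists q, lt EE q /\ le q hh0)) as [[q0 [hq1 hq2]]|hQ].
  - assert (hEh : lt EE hh0) by (apply (o_lt_le_trans HO hq1 hq2)).
    set (u := cut C hh0 a).
    assert (hu : exists w, ev C u w <> 0).
    { destruct (op_lt_e _ _ _ hEh) as [w [k1 k2]].
      assert (hw : lt w a).
      { destruct (o_trich HC w a) as [q|[q|q]]; auto; exfalso.
        - subst. unfold EE in k1. rewrite ev_ee_eq, hh_a in k1. lia.
        - rewrite hh_above in k1; auto. lia. }
      exists w. unfold u. rewrite ev_cut, dec_t; auto. lia. }
    destruct (op_supp C u) as [lu hlu].
    destruct (o_max_list HC (fun w => ev C u w <> 0) lu hlu hu) as [t [ht1 ht2]].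
    assert (hta : lt t a).
    { unfold u in ht1. rewrite ev_cut in ht1. destruct (dec_spec (lt t a)) as [[e1 e2]|[e1 e2]]; auto.
      rewrite e2 in ht1. lia. }
    assert (hlow : lowt C t u).
    { intros z hz. apply NNPP. intro e. apply (o_le_nlt HC (ht2 z e) hz). }
    set (n := ev C u t + 1).
    assert (hcu : forall q : QQ, le (cut C (proj1_sig q) a) u).
    { intros [q [k1 k2]]. simpl. destruct (Qfacts q k1 k2) as [z1 z2].
      destruct k2 as [k2|k2]; [left|right; subst; auto].
      apply cut_mono2; auto.
      - apply hh_above.
      - rewrite hh_a; auto. }
    set (gm := fun z : osum QQ PP => match z with
       | inl q => exist (fun f => le f EE) (cut C (proj1_sig q) a) (or_introl (cut_lt_EE _))
       | inr p => exist (fun f => le f EE) (sh C t n (proj1_sig p)) (sh_le_ee C HC t n (proj1_sig p) a k hta hk1 (proj2_sig p))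
       end : PP).
    apply iso_sym. apply (@SB PP (osum QQ PP) HP HQP (fun p => inr p) gm).
    + intros x y h. exact h.
    + intros [q1|p1] [q2|p2] h.
      * destruct q1 as [q1 [a1 b1]], q2 as [q2 [a2 b2]].
        change (lt q1 q2) in h. change (lt (cut C q1 a) (cut C q2 a)).
        destruct (Qfacts q1 a1 b1) as [z1 e1]. destruct (Qfacts q2 a2 b2) as [z2 e2].
        apply cut_mono2; auto. congruence.
      * change (lt (cut C (proj1_sig q1) a) (sh C t n (proj1_sig p2))).
        apply (o_le_lt_trans HO (hcu q1)). apply sh_big; auto.
      * destruct h.
      * change (lt (sh C t n (proj1_sig p1)) (sh C t n (proj1_sig p2))). apply (sh_mono C HC t n). exact h.
  - apply iso_sym. apply (@iso_of_surj PP (osum QQ PP) HP HQP (fun p => inr p)).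
    + intros x y h. exact h.
    + intros [q|p].
      * exfalso. destruct q as [q hq]. apply hQ. exists q; auto.
      * exists p; auto.
Qed.

Lemma maxeP : maxe PP.
Proof.
  right. exists (exist (fun f => le f EE) EE (or_intror eq_refl)). intros [x hx]. simpl.
  apply (o_le_nlt HO hx).
Qed.

Lemma maxeQ : maxe QQ.
Proof.
  destruct (classic (lt EE hh0)) as [e|e].
  - right. exists (exist (fun f => lt EE f /\ le f hh0) hh0 (conj e (or_intror eq_refl))).
    intros [x [h0 hx]]. simpl. apply (o_le_nlt HO hx).
  - left. intros [x [h1 h2]]. apply e. apply (o_lt_le_trans HO h1 h2).
Qed.

Lemma maxePQ : maxe (osum PP QQ).
Proof.
  destruct (classic (lt EE hh0)) as [e|e].
  - right. exists (inr (exist (fun f => lt EE f /\ le f hh0) hh0 (conj e (or_intror eq_refl))) : osum PP QQ).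
    intros [x|[x [h0 hx]]]; simpl; auto. apply (o_le_nlt HO hx).
  - right. exists (inl (exist (fun f => le f EE) EE (or_intror eq_refl)) : osum PP QQ).
    intros [[x hx]|[x [h1 h2]]]; simpl.
    + apply (o_le_nlt HO hx).
    + intros _. apply e. apply (o_lt_le_trans HO h1 h2).
Qed.

Lemma maxeQP : maxe (osum QQ PP).
Proof.
  right. exists (inr (exist (fun f => le f EE) EE (or_intror eq_refl)) : osum QQ PP).
  intros [x|[x hx]]; simpl; auto. apply (o_le_nlt HO hx).
Qed.

Theorem HHomeo : homeomorphic (segment (omega_pow C) g0) (segment (omega_pow C) gg1).
Proof.
  assert (HP : is_ordinal PP) by apply (sub_ord _ HO).
  assert (HQ : is_ordinal QQ) by apply (sub_ord _ HO).
  assert (HT : is_ordinal TT) by apply (sub_ord _ HO).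
  assert (H12 : ord_iso (segment (omega_pow C) g0) (osum (osum PP QQ) TT)).
  { apply (iso_trans part1). apply osum_iso; [apply part2|apply iso_refl]. }
  apply (iso_homeo_trans _ _ _ H12).
  apply (homeo_trans _ (osum (osum QQ PP) TT)).
  { apply (osum_homeo_l _ _ _ HT maxePQ maxeQP). apply osum_swap; auto. apply maxeP. apply maxeQ. }
  apply (homeo_trans _ (osum PP TT)).
  { apply (osum_homeo_l _ _ _ HT maxeQP maxeP). apply iso_homeo. apply stepD. }
  apply iso_homeo. apply (iso_trans (osum_iso _ _ _ _ (iso_refl PP) TT_iso)).
  apply iso_sym. apply part3.
Qed.

End HH.

Lemma fin_iso (C : LO) (HC : is_ordinal C) (c0 : C) (Hc0 : forall y, le c0 y) (n : nat) :
  ord_iso (segment (omega_pow C) (ee C c0 n)) (fin n).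
Proof.
  set (phi := fun x : segment (omega_pow C) (ee C c0 n) =>
     exist (fun i => i < n) (ev C (proj1_sig x) c0) (proj2 (below_ee C HC _ c0 n (proj2_sig x))) : fin n).
  apply (@iso_of_surj _ _ (segment_ord _ (omega_pow_ord C HC)) (fin_ord n) phi).
  - intros [F1 h1] [F2 h2] h. change (lt F1 F2) in h. change (ev C F1 c0 < ev C F2 c0).
    destruct (op_lt_e _ _ _ h) as [w [k1 k2]].
    destruct (Hc0 w) as [e|e].
    + exfalso. destruct (below_ee C HC _ c0 n h2) as [z _]. rewrite z in k1; auto. lia.
    + subst. auto.
  - intros [i hi].
    assert (hl : lt (ee C c0 i) (ee C c0 n)).
    { apply (op_lt_i C _ _ c0).
      - rewrite !ev_ee_eq. auto.
      - intros y hy. rewrite !ev_ee_ne; auto; apply (lt_ne C HC _ _ hy). }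
    exists (exist _ (ee C c0 i) hl). apply sig_eq. simpl. apply ev_ee_eq.
Qed.

Lemma mul1_iso (L : LO) (HL : is_ordinal L) : ord_iso (mul_nat L 1) L.
Proof.
  apply (@iso_of_surj (mul_nat L 1) L (mul_nat_ord L 1 HL) HL (fun p => snd p)).
  - intros [[i pi] x] [[j pj] y]. simpl. intros [h|[_ h]]; auto. lia.
  - intro y. exists (exist (fun i => i < 1) 0 (Nat.lt_0_succ 0), y). reflexivity.
Qed.

Lemma seg_seg_iso (C : LO) (HC : is_ordinal C) (m a : C) (hma : lt m a) :
  ord_iso (segment C m) (segment (segment C a) (exist (fun y => lt y a) m hma)).
Proof.
  apply (@iso_of_surj _ _ (segment_ord m HC) (segment_ord _ (segment_ord a HC))
    (fun x => exist (fun y : segment C a => lt y (exist (fun y => lt y a) m hma))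
                    (exist (fun y => lt y a) (proj1_sig x) (o_trans HC (proj2_sig x) hma)) (proj2_sig x))).
  - intros [x hx] [y hy] h. exact h.
  - intros [[y hy] hym]. exists (exist (fun y => lt y m) y hym). apply sig_eq. simpl. apply sig_eq. reflexivity.
Qed.

Theorem existence (G : LO) (HG : is_ordinal G) : exists c, valid c /\ homeomorphic G (space c).
Proof.
  destruct (classic (exists x : G, True)) as [[x0 _]|hG].
  2:{ exists (Fam1 0). split; [exact I|]. apply iso_homeo.
      apply (@iso_of_surj G (fin 0) HG (fin_ord 0) (fun x => False_rect _ (hG (ex_intro _ x I)))).
      - intros x. exfalso. apply hG. exists x; auto.
      - intros [i hi]. lia. }
  destruct (o_min HG (fun _ => True) (ex_intro _ x0 I)) as [c0 [_ hc0]].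
  assert (Hc0 : forall y, le c0 y) by (intro y; apply (o_nlt_le HG); apply hc0; auto).
  assert (HO := omega_pow_ord G HG).
  assert (fm : smono (fun x => ee G x 1)).
  { intros x y h. apply (op_lt_i G _ _ y).
    - rewrite ev_ee_eq, ev_ee_ne; auto. apply (lt_ne G HG _ _ h).
    - intros z hz. rewrite !ev_ee_ne; auto. apply (lt_ne G HG _ _ hz). apply (lt_ne G HG _ _ (o_trans HG h hz)). }
  destruct (compare HG HO fm) as [Hiso|[g0 Hiso]].
  - exists (Fam3 1 G). split.
    + split; [lia|split; [auto|constructor; exact x0]].
    + apply iso_homeo. apply (iso_trans Hiso). apply iso_sym. apply mul1_iso; auto.
  - destruct (classic (forall z, lt c0 z -> ev G g0 z = 0)) as [hlow|hlow].
    + exists (Fam1 (ev G g0 c0)). split; [exact I|]. apply iso_homeo. apply (iso_trans Hiso).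
      assert (e : g0 = ee G c0 (ev G g0 c0)).
      { apply op_eq. intro y. destruct (Hc0 y) as [q|q].
        - rewrite hlow, ev_ee_ne; auto. apply (lt_ne G HG _ _ q).
        - subst. rewrite ev_ee_eq. auto. }
      rewrite e at 1. apply fin_iso; auto.
    + apply not_all_ex_not in hlow. destruct hlow as [z hz]. apply imply_to_and in hz. destruct hz as [hz1 hz2].
      destruct (op_supp G g0) as [l hl].
      destruct (o_max_list HG (fun w => ev G g0 w <> 0) l hl (ex_intro _ z hz2)) as [a [ha1 ha2]].
      assert (hca : lt c0 a) by (apply (o_lt_le_trans HG hz1 (ha2 z hz2))).
      assert (ha : forall y, lt a y -> ev G g0 y = 0).
      { intros y hy. apply NNPP. intro e. apply (o_le_nlt HG (ha2 y e) hy). }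
      set (k := ev G g0 a).
      assert (hk1 : 1 <= k) by (unfold k; lia).
      set (m := rk G c0 g0).
      destruct (rk_nz G HG c0 g0 (ex_intro _ z hz2)) as [hm1 hm2]. fold m in hm1, hm2.
      assert (hma : le m a) by (apply ha2; auto).
      assert (Va : is_ordinal (segment G a)) by (apply segment_ord; auto).
      assert (Na : nonzero (segment G a)) by (constructor; exact (exist _ c0 hca)).
      destruct hma as [hma|hma].
      * assert (HH := HHomeo G HG g0 a m k ha eq_refl hk1 hm1 hm2 hma).
        destruct (Hc0 m) as [hcm|hcm].
        -- exists (Fam4 k (segment G a) (segment G m)). split.
           ++ split; [lia|split; [auto|split; [auto|split; [apply segment_ord; auto|split]]]].
              ** constructor. exact (exist _ c0 hcm).
              ** exists (exist _ m hma). apply (seg_seg_iso G HG).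
           ++ apply (iso_homeo_trans _ _ _ Hiso). apply (homeo_iso_trans _ _ _ HH).
              apply iso_sym. apply (Oc G HG a m k hma).
        -- exists (Fam2 k (segment G a)). split.
           ++ split; [lia|split; auto].
           ++ apply (iso_homeo_trans _ _ _ Hiso). rewrite <- hcm in HH. apply (homeo_iso_trans _ _ _ HH).
              apply iso_sym. apply (Ob G HG a c0 k hca Hc0).
      * exists (Fam3 k (segment G a)). split.
        -- split; [lia|split; auto].
        -- apply iso_homeo. apply (iso_trans Hiso).
           assert (e : g0 = ee G a k).
           { apply op_eq. intro y. destruct (o_trich HG y a) as [q|[q|q]].
             - rewrite ev_ee_ne by (apply (lt_ne' G HG _ _ q)). apply hm2. rewrite hma. auto.
             - subst. rewrite ev_ee_eq. auto.
             - rewrite ha, ev_ee_ne; auto. apply (lt_ne G HG _ _ q). }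
           rewrite e at 1. apply iso_sym. apply Oa; auto.
Qed.

Definition count_is (X : LO) (P : X -> Prop) (n : nat) :=
  exists l : list X, NoDup l /\ length l = n /\ forall x, P x <-> In x l.

Lemma count_unique (X : LO) P n n' : count_is X P n -> count_is X P n' -> n = n'.
Proof.
  intros [l [h1 [h2 h3]]] [l' [h1' [h2' h3']]].
  assert (length l <= length l') by (apply NoDup_incl_length; auto; intros x hx; apply h3', h3, hx).
  assert (length l' <= length l) by (apply NoDup_incl_length; auto; intros x hx; apply h3, h3', hx).
  lia.
Qed.

Lemma count_bij (X Y : LO) (f : X -> Y) (g : Y -> X) :
  (forall x, g (f x) = x) -> (forall y, f (g y) = y) ->
  forall P n, count_is X P n -> count_is Y (fun y => P (g y)) n.
Proof.
  intros gf fg P n [l [h1 [h2 h3]]]. exists (map f l). split; [|split].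
  - apply FinFun.Injective_map_NoDup; auto. intros x y e. rewrite <- (gf x), e, gf. auto.
  - rewrite length_map; auto.
  - intro y. rewrite h3. split.
    + intro h. rewrite <- (fg y). apply in_map. auto.
    + intro h. apply in_map_iff in h. destruct h as [x [e hx]]. subst. rewrite gf. auto.
Qed.

Lemma no_cover (X : LO) (phi : nat -> X) : (forall i j, phi i = phi j -> i = j) -> ~ exists l : list X, forall x, In x l.
Proof.
  intros hinj [l hl].
  assert (H : length (map phi (seq 0 (S (length l)))) <= length l).
  { apply NoDup_incl_length.
    - apply FinFun.Injective_map_NoDup; [intros i j; apply hinj|apply seq_NoDup].
    - intros x _. apply hl. }
  rewrite length_map, length_seq in H. lia.
Qed.

Section MOD.
Variable A : LO.
Hypothesis HA : is_ordinal A.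
Variable a0 : A.
Hypothesis Ha0 : forall a, le a0 a.

Definition CC := succ A.
Lemma HCC : is_ordinal CC.
Proof. apply succ_ord; auto. Qed.
Definition cc0 : CC := Some a0.
Lemma Hcc0 : forall c : CC, le cc0 c.
Proof.
  intros [a|].
  - destruct (Ha0 a) as [h|h]; [left; exact h|right; subst; reflexivity].
  - left. exact I.
Qed.

Lemma lt_top (c : CC) : c <> None -> lt c (None : CC).
Proof. destruct c; simpl; tauto. Qed.
Lemma nlt_top (c : CC) : ~ lt (None : CC) c.
Proof. destruct c; simpl; tauto. Qed.

Definition rho (g : omega_pow CC) (x : segment (omega_pow CC) g) : CC := rkS CC cc0 g x.

Lemma RFm g : RF (segment (omega_pow CC) g) CC (rho g).
Proof. apply (RF_S CC HCC cc0 Hcc0). Qed.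

Lemma rk_top (x : omega_pow CC) : rk CC cc0 x = None -> ev CC x None <> 0 /\ x = ee CC None (ev CC x None).
Proof.
  intro h. destruct (classic (exists d, ev CC x d <> 0)) as [hn|hn].
  - destruct (rk_nz CC HCC cc0 x hn) as [k1 k2]. rewrite h in k1, k2. split; auto.
    apply op_eq. intros [a|].
    + rewrite ev_ee_ne by discriminate. apply k2. exact I.
    + rewrite ev_ee_eq. auto.
  - exfalso. rewrite rk_zero in h; [discriminate|exact HCC|].
    intro d. apply NNPP. intro e. apply hn; eauto.
Qed.

Lemma rk_ee_top j : 1 <= j -> rk CC cc0 (ee CC None j) = None.
Proof.
  intro hj. apply (rk_eq CC HCC). { rewrite ev_ee_eq. lia. }
  intros d hd. apply ev_ee_ne. intro e; subst. apply (o_irr HCC _ hd).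
Qed.

Lemma rk_ee_some a : rk CC cc0 (ee CC (Some a) 1) = Some a.
Proof.
  apply (rk_eq CC HCC). { rewrite ev_ee_eq. lia. }
  intros d hd. apply ev_ee_ne. intro e; subst. apply (o_irr HCC _ hd).
Qed.

Variable g : omega_pow CC.
Hypothesis gN : 1 <= ev CC g None.

Lemma low_lt_g (x : omega_pow CC) : ev CC x None = 0 -> lt x g.
Proof.
  intro h. apply (op_lt_i CC _ _ None).
  - lia.
  - intros y hy. exfalso. apply (nlt_top y hy).
Qed.

Lemma G_some a : exists x : segment (omega_pow CC) g, rho g x = Some a.
Proof.
  assert (hx : lt (ee CC (Some a) 1) g) by (apply low_lt_g; apply ev_ee_ne; discriminate).
  exists (exist (fun x => lt x g) _ hx). apply rk_ee_some.
Qed.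

Lemma G_inf : ~ exists l : list (segment (omega_pow CC) g), forall x, In x l.
Proof.
  assert (hx : forall i, lt (ee CC cc0 i) g) by (intro i; apply low_lt_g; apply ev_ee_ne; discriminate).
  apply (no_cover (segment (omega_pow CC) g) (fun i => exist (fun x => lt x g) _ (hx i))).
  intros i j e. apply (f_equal (@proj1_sig _ _)) in e. simpl in e.
  apply (f_equal (fun f => ev CC f cc0)) in e. rewrite !ev_ee_eq in e. auto.
Qed.

Lemma G_zero : lt (zero CC) g.
Proof. apply low_lt_g. apply ev_zero. Qed.

Lemma G_unb (b : CC) : (forall w, ev CC g w <> 0 -> lt b w) ->
  ~ bnd_ord (segment (omega_pow CC) g) (fun y => le b (rho g y)).
Proof.
  intros hb [[u hu] hbd].
  assert (hv : lt (tr CC u b) g).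
  { destruct (lt_witness_nz CC _ _ hu) as [w [k0 [k1 k2]]].
    apply (op_lt_i CC _ _ w).
    - rewrite ev_tr_gt; auto.
    - intros y hy. rewrite ev_tr_gt; auto. apply (o_trans HCC (hb w k0) hy). }
  specialize (hbd (exist (fun x => lt x g) _ hv)).
  assert (le b (rho g (exist (fun x => lt x g) _ hv))).
  { unfold rho, rkS. simpl. rewrite rk_tr; auto. right; auto. apply HCC. }
  specialize (hbd H).
  assert (hl : le (tr CC u b) u).
  { destruct hbd as [e|e]; [left; exact e|right; apply (f_equal (@proj1_sig _ _)) in e; exact e]. }
  apply (o_le_nlt (omega_pow_ord CC HCC) hl). apply lt_tr. apply HCC.
Qed.

Lemma G_count n : (forall j, 1 <= j -> (lt (ee CC None j) g <-> j <= n)) ->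
  count_is (segment (omega_pow CC) g) (fun x => rho g x = None) n.
Proof.
  intro hn.
  assert (H : forall n', n' <= n -> exists l : list (segment (omega_pow CC) g), NoDup l /\ length l = n' /\
             forall x, In x l <-> exists j, 1 <= j <= n' /\ proj1_sig x = ee CC None j).
  { induction n' as [|n' IH]; intro hle.
    - exists nil. split; [constructor|split; auto]. intro x. split; [intros []|intros [j [hj _]]; lia].
    - destruct (IH ltac:(lia)) as [l [h1 [h2 h3]]].
      assert (hx : lt (ee CC None (S n')) g) by (apply hn; lia).
      exists (exist (fun x => lt x g) _ hx :: l). split; [|split].
      + constructor; auto. intro hin. apply h3 in hin. destruct hin as [j [hj e]]. simpl in e.
        apply (f_equal (fun f => ev CC f None)) in e. rewrite !ev_ee_eq in e. lia.
      + simpl. auto.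
      + intro x. simpl. rewrite h3. split.
        * intros [e|[j [hj e]]].
          -- exists (S n'). split; [lia|]. subst. reflexivity.
          -- exists j. split; [lia|auto].
        * intros [j [hj e]]. destruct (Nat.eq_dec j (S n')) as [ej|ej].
          -- left. apply sig_eq. simpl. subst. auto.
          -- right. exists j. split; [lia|auto]. }
  destruct (H n (le_n n)) as [l [h1 [h2 h3]]]. exists l. split; [auto|split; auto].
  intro x. rewrite h3. split.
  - intro e. unfold rho, rkS in e. destruct (rk_top _ e) as [k1 k2].
    exists (ev CC (proj1_sig x) None). split; auto.
    split; [lia|]. apply hn; [lia|]. rewrite <- k2. exact (proj2_sig x).
  - intros [j [hj e]]. unfold rho, rkS. rewrite e. apply rk_ee_top. lia.
Qed.

End MOD.

Lemma bnd_mono (X : LO) (T T' : X -> Prop) : (forall x, T' x -> T x) -> bnd_ord X T -> bnd_ord X T'.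
Proof. intros h [u hu]. exists u. auto. Qed.

Section MOD2.
Variable A : LO.
Hypothesis HA : is_ordinal A.
Variable a0 : A.
Hypothesis Ha0 : forall a, le a0 a.

Local Notation C := (CC A).
Let HC : is_ordinal C := HCC A HA.
Local Notation c0 := (cc0 A a0).
Let Hc0 : forall c : C, le c0 c := Hcc0 A a0 Ha0.
Let HO := omega_pow_ord C HC.
Local Notation N := (@None A : car (CC A)).

Definition g3 k : omega_pow C := ee C None k.
Definition g2 k : omega_pow C := upd C (ee C None k) c0 1.
Definition g4 k (b : A) : omega_pow C := upd C (ee C None k) (Some b) 1.

Lemma gN3 k : 1 <= k -> 1 <= ev C (g3 k) None.
Proof. intro h. unfold g3. rewrite ev_ee_eq. auto. Qed.
Lemma gNu k (c : C) : c <> None -> 1 <= k -> 1 <= ev C (upd C (ee C None k) c 1) None.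
Proof. intros hc h. rewrite ev_upd_ne, ev_ee_eq; auto. Qed.

Lemma cnt_ee k j : 1 <= j -> (lt (ee C None j) (g3 k) <-> j <= k - 1).
Proof.
  intro hj. split.
  - intro h. apply below_ee in h; [|exact HC]. destruct h as [_ h]. rewrite ev_ee_eq in h. lia.
  - intro h. apply (op_lt_i C _ _ None).
    + unfold g3. rewrite !ev_ee_eq. lia.
    + intros y hy. exfalso. apply (nlt_top A y hy).
Qed.

Lemma cnt_upd (c : C) k j : c <> None -> 1 <= j -> (lt (ee C None j) (upd C (ee C None k) c 1) <-> j <= k).
Proof.
  intros hc hj. split.
  - intro h. apply NNPP. intro hn.
    assert (h' : lt (upd C (ee C None k) c 1) (ee C None j)).
    { apply (op_lt_i C _ _ None).
      - rewrite ev_upd_ne, !ev_ee_eq; auto. lia.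
      - intros y hy. exfalso. apply (nlt_top A y hy). }
    apply (o_asym HO h h').
  - intro h. destruct (Nat.eq_dec j k) as [e|e].
    + subst j. apply (op_lt_i C _ _ c).
      * rewrite ev_upd_eq, ev_ee_ne; auto.
      * intros y hy. rewrite ev_upd_ne; auto. apply (lt_ne C HC _ _ hy).
    + apply (op_lt_i C _ _ None).
      * rewrite ev_upd_ne, !ev_ee_eq; auto. lia.
      * intros y hy. exfalso. apply (nlt_top A y hy).
Qed.

Lemma le_top_eq (c : C) : le N c -> c = None.
Proof. intros [h|h]; auto. exfalso. apply (nlt_top A c h). Qed.

Lemma seg_le (g : omega_pow C) (x y : segment (omega_pow C) g) : le (proj1_sig x) (proj1_sig y) -> le x y.
Proof. intros [h|h]; [left; exact h|right; apply sig_eq; exact h]. Qed.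

Lemma bnd3 k : 1 <= k -> bnd_ord (segment (omega_pow C) (g3 k)) (fun y => le N (rho A a0 (g3 k) y)).
Proof.
  intro hk.
  assert (hu : lt (ee C None (k - 1)) (g3 k)).
  { apply (op_lt_i C _ _ None). - unfold g3. rewrite !ev_ee_eq. lia. - intros y hy. exfalso. apply (nlt_top A y hy). }
  exists (exist (fun x => lt x _) _ hu). intros [y hy] h. apply seg_le. simpl.
  apply le_top_eq in h. unfold rho, rkS in h. simpl in h. destruct (rk_top A HA a0 y h) as [k1 k2].
  apply below_ee in hy; [|exact HC]. destruct hy as [_ hy].
  rewrite k2. destruct (Nat.eq_dec (ev C y None) (k - 1)) as [e|e].
  - right. rewrite e. auto.
  - left. apply (op_lt_i C _ _ None).
    + rewrite !ev_ee_eq. lia.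
    + intros z hz. exfalso. apply (nlt_top A z hz).
Qed.

Lemma notop3 (x : segment (omega_pow C) (g3 1)) : rho A a0 (g3 1) x <> None.
Proof.
  destruct x as [x hx]. unfold rho, rkS. simpl. intro h. destruct (rk_top A HA a0 x h) as [k1 _].
  apply below_ee in hx; [|exact HC]. destruct hx as [_ hx]. lia.
Qed.

Lemma unb3 k (a : A) : ~ bnd_ord (segment (omega_pow C) (g3 k)) (fun y => @le (CC A) (Some a) (rho A a0 (g3 k) y)).
Proof.
  apply G_unb; auto. intros w hw. unfold g3 in hw. destruct w as [w|]; [|exact I].
  rewrite ev_ee_ne in hw; [tauto|discriminate].
Qed.

Lemma ncpt3 k : ~ bnd_ord (segment (omega_pow C) (g3 k)) (fun _ => True).
Proof.
  intro h. apply (unb3 k a0). revert h. apply bnd_mono. auto.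
Qed.

Lemma g4_nz k b w : ev C (g4 k b) w <> 0 -> w = Some b \/ w = None.
Proof.
  intro h. unfold g4 in h. rewrite ev_upd in h. destruct (dec_spec (w = Some b)) as [[e1 e2]|[e1 e2]]; auto.
  rewrite e2 in h. right. apply NNPP. intro e. rewrite ev_ee_ne in h; auto.
Qed.

Lemma unb4 k b (c : C) : lt c (Some b) -> ~ bnd_ord (segment (omega_pow C) (g4 k b)) (fun y => le c (rho A a0 (g4 k b) y)).
Proof.
  intro hc. apply G_unb; auto. intros w hw. destruct (g4_nz k b w hw) as [e|e]; subst; auto.
  apply (lt_top A). intro e; subst. exact hc.
Qed.

Lemma ncpt4 k b : lt a0 b -> ~ bnd_ord (segment (omega_pow C) (g4 k b)) (fun _ => True).
Proof.
  intros hb h. apply (unb4 k b c0 hb). revert h. apply bnd_mono. auto.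
Qed.

Lemma upd_top_char (c : C) k (y : omega_pow C) : c <> None ->
  lt y (upd C (ee C None k) c 1) -> (forall d, lt d c -> ev C y d = 0) -> le y (ee C None k).
Proof.
  intros hc hy hd. destruct (lt_witness_nz C _ _ hy) as [w [k0 [k1 k2]]].
  rewrite ev_upd in k0, k1. destruct (dec_spec (w = c)) as [[e1 e2]|[e1 e2]]; rewrite e2 in k0, k1.
  - subst w. right. apply op_eq. intro z. destruct (o_trich HC z c) as [q|[q|q]].
    + rewrite hd, ev_ee_ne; auto. intro e; subst. exact (nlt_top A c q).
    + subst. rewrite ev_ee_ne; auto. lia.
    + rewrite k2, ev_upd_ne; auto. apply (lt_ne C HC _ _ q).
  - assert (w = None). { apply NNPP. intro e. rewrite ev_ee_ne in k0; auto. }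
    subst w. left. apply (op_lt_i C _ _ None).
    + rewrite ev_ee_eq. rewrite ev_ee_eq in k1. auto.
    + intros z hz. exfalso. apply (nlt_top A z hz).
Qed.

Lemma cpt2 k : 1 <= k -> bnd_ord (segment (omega_pow C) (g2 k)) (fun _ => True).
Proof.
  intro hk.
  assert (hu : lt (ee C None k) (g2 k)) by (apply cnt_upd; auto; discriminate).
  exists (exist (fun x => lt x _) _ hu). intros [y hy] _. apply seg_le. simpl.
  apply (upd_top_char c0); auto. discriminate.
  intros d hd. exfalso. apply (o_le_nlt HC (Hc0 d) hd).
Qed.

Lemma bnd4 k b : 1 <= k -> bnd_ord (segment (omega_pow C) (g4 k b)) (fun y => @le (CC A) (Some b) (rho A a0 (g4 k b) y)).
Proof.
  intro hk.
  assert (hu : lt (ee C None k) (g4 k b)) by (apply cnt_upd; auto; discriminate).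
  exists (exist (fun x => lt x _) _ hu). intros [y hy] h. apply seg_le. simpl.
  apply (upd_top_char (Some b)); auto. discriminate.
  intros d hd. unfold rho, rkS in h. simpl in h.
  destruct (classic (exists d', ev C y d' <> 0)) as [hn|hn].
  - destruct (rk_nz C HC c0 y hn) as [_ k2]. apply k2. apply (o_lt_le_trans HC hd h).
  - apply NNPP. intro e. apply hn. eauto.
Qed.

Lemma topex (g : omega_pow C) : lt (ee C None 1) g -> exists x : segment (omega_pow C) g, rho A a0 g x = None.
Proof.
  intro h. exists (exist (fun x => lt x g) _ h). unfold rho, rkS. simpl. apply rk_ee_top; auto.
Qed.

Lemma isoA : ord_iso A (segment C None).
Proof.
  apply (@iso_of_surj A (segment C None) HA (segment_ord _ HC)
          (fun a => exist (fun c : C => lt c None) (Some a) I)).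
  - intros x y h. exact h.
  - intros [[a|] p]. + exists a. apply sig_eq. reflexivity. + destruct p.
Qed.

Lemma isoB (b : A) : ord_iso (segment A b) (segment C (Some b)).
Proof.
  apply (@iso_of_surj (segment A b) (segment C (Some b)) (segment_ord _ HA) (segment_ord _ HC)
          (fun x => exist (fun c : C => lt c (Some b)) (Some (proj1_sig x)) (proj2_sig x))).
  - intros x y h. exact h.
  - intros [[a|] p]. + exists (exist _ a p). apply sig_eq. reflexivity. + destruct p.
Qed.

Lemma OPA : ord_iso (omega_pow A) (omega_pow (segment C None)).
Proof. apply op_iso; auto. apply segment_ord; auto. apply isoA. Qed.

Lemma model3 k : ord_iso (mul_nat (omega_pow A) k) (segment (omega_pow C) (g3 k)).
Proof. apply (iso_trans (mul_iso _ _ k OPA)). apply (Oa C HC None k). Qed.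

Lemma model2 k : ord_iso (succ (mul_nat (omega_pow A) k)) (segment (omega_pow C) (g2 k)).
Proof. apply (iso_trans (succ_iso _ _ (mul_iso _ _ k OPA))). apply (Ob C HC None c0 k I Hc0). Qed.

Lemma model4 k (B : LO) (HB : is_ordinal B) b : ord_iso B (segment A b) ->
  ord_iso (osum (mul_nat (omega_pow A) k) (omega_pow B)) (segment (omega_pow C) (g4 k b)).
Proof.
  intro hB. apply (iso_trans (osum_iso _ _ _ _ (mul_iso _ _ k OPA) (op_iso _ _ HB (segment_ord _ HC) (iso_trans hB (isoB b))))).
  apply (Oc C HC None (Some b) k I).
Qed.

End MOD2.

Lemma iso_of_rel (X Y : LO) (HX : is_ordinal X) (HY : is_ordinal Y) (Q : X -> Y -> Prop) :
  (forall x, exists y, Q x y) -> (forall y, exists x, Q x y) ->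
  (forall x y x' y', Q x y -> Q x' y' -> (lt x x' <-> lt y y')) -> ord_iso X Y.
Proof.
  intros tot sur mon.
  set (f := fun x => proj1_sig (constructive_indefinite_description _ (tot x))).
  assert (hf : forall x, Q x (f x)).
  { intro x. unfold f. destruct (constructive_indefinite_description _ (tot x)); auto. }
  apply (@iso_of_surj X Y HX HY f).
  - intros x x' h. apply (mon x (f x) x' (f x')); auto.
  - intro y. destruct (sur y) as [x hx]. exists x.
    destruct (o_trich HY (f x) y) as [e|[e|e]]; auto; exfalso.
    + apply (o_irr HX x). apply (mon x (f x) x y); auto.
    + apply (o_irr HX x). apply (mon x y x (f x)); auto.
Qed.

Lemma count_ext (X : LO) (P P' : X -> Prop) n : (forall x, P x <-> P' x) -> count_is X P n -> count_is X P' n.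
Proof. intros e [l [h1 [h2 h3]]]. exists l. split; auto. split; auto. intro x. rewrite <- e. auto. Qed.

Section TR.
Set Default Proof Using "All".
Variables A1 A2 : LO.
Hypothesis HA1 : is_ordinal A1.
Hypothesis HA2 : is_ordinal A2.
Variables (a01 : A1) (a02 : A2).
Hypothesis Ha01 : forall a, le a01 a.
Hypothesis Ha02 : forall a, le a02 a.
Variables (g1 : omega_pow (CC A1)) (g2 : omega_pow (CC A2)).
Hypothesis gN1 : 1 <= ev (CC A1) g1 None.
Hypothesis gN2 : 1 <= ev (CC A2) g2 None.
Local Notation S1 := (segment (omega_pow (CC A1)) g1).
Local Notation S2 := (segment (omega_pow (CC A2)) g2).
Variables (h : S1 -> S2) (hi : S2 -> S1).
Hypothesis e1 : forall x, hi (h x) = x.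
Hypothesis e2 : forall y, h (hi y) = y.
Hypothesis ch : ord_continuous S1 S2 h.
Hypothesis chi : ord_continuous S2 S1 hi.
Local Notation r1 := (rho A1 a01 g1).
Local Notation r2 := (rho A2 a02 g2).

Let HC1 := HCC A1 HA1.
Let HC2 := HCC A2 HA2.
Let HS1 : is_ordinal S1 := segment_ord _ (omega_pow_ord _ HC1).
Let HS2 : is_ordinal S2 := segment_ord _ (omega_pow_ord _ HC2).

Lemma T1 x z : lt (r1 z) (r1 x) <-> lt (r2 (h z)) (r2 (h x)).
Proof.
  apply (rank_transfer S1 S2 (CC A1) (CC A2) HC1 HC2 r1 r2 (RFm A1 HA1 a01 Ha01 g1) (RFm A2 HA2 a02 Ha02 g2) h hi e1 e2 ch chi).
Qed.

Lemma T1eq x z : r1 z = r1 x <-> r2 (h z) = r2 (h x).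
Proof.
  split; intro e.
  - destruct (o_trich HC2 (r2 (h z)) (r2 (h x))) as [q|[q|q]]; auto; exfalso.
    + apply T1 in q. rewrite e in q. apply (o_irr HC1 _ q).
    + apply T1 in q. rewrite e in q. apply (o_irr HC1 _ q).
  - destruct (o_trich HC1 (r1 z) (r1 x)) as [q|[q|q]]; auto; exfalso.
    + apply T1 in q. rewrite e in q. apply (o_irr HC2 _ q).
    + apply T1 in q. rewrite e in q. apply (o_irr HC2 _ q).
Qed.

Lemma T1le x z : le (r1 z) (r1 x) <-> le (r2 (h z)) (r2 (h x)).
Proof.
  split; (intros [q|q]; [left; apply T1; auto|right; apply T1eq; auto]).
Qed.

Let x01 : S1 := exist (fun x => lt x g1) _ (G_zero A1 g1 gN1).
Let x02 : S2 := exist (fun x => lt x g2) _ (G_zero A2 g2 gN2).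

Lemma bnd_12 (T : S1 -> Prop) : bnd_ord S1 T -> bnd_ord S2 (fun y => T (hi y)).
Proof.
  intro hb. apply (bnd_equiv S2 HS2 x02). apply (bnd_top_homeo S1 S2 h hi e1 e2 ch).
  apply (bnd_equiv S1 HS1 x01). auto.
Qed.

Lemma bnd_21 (T : S2 -> Prop) : bnd_ord S2 T -> bnd_ord S1 (fun x => T (h x)).
Proof.
  intro hb. apply (bnd_equiv S1 HS1 x01). apply (bnd_top_homeo S2 S1 hi h e2 e1 chi).
  apply (bnd_equiv S2 HS2 x02). auto.
Qed.

Lemma Ubnd x : bnd_ord S1 (fun y => le (r1 x) (r1 y)) <-> bnd_ord S2 (fun y => le (r2 (h x)) (r2 y)).
Proof.
  split; intro hb.
  - apply bnd_12 in hb. revert hb. apply bnd_mono. intros y hy. apply T1le. rewrite e2. auto.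
  - apply bnd_21 in hb. revert hb. apply bnd_mono. intros y hy. apply T1le in hy. auto.
Qed.

Lemma Cpt : bnd_ord S1 (fun _ => True) <-> bnd_ord S2 (fun _ => True).
Proof.
  split; intro hb; [apply bnd_12 in hb|apply bnd_21 in hb]; revert hb; apply bnd_mono; auto.
Qed.

Lemma Top12 : (exists y, r2 y = None) -> forall x, r1 x = None -> r2 (h x) = None.
Proof.
  intros [y hy] x hx. apply NNPP. intro hn.
  assert (q : lt (r2 (h x)) (r2 (h (hi y)))).
  { rewrite e2, hy. apply lt_top. auto. }
  apply T1 in q. rewrite hx in q. apply (nlt_top A1 _ q).
Qed.

Lemma Top21 : (exists x, r1 x = None) -> forall x, r2 (h x) = None -> r1 x = None.
Proof.
  intros [y hy] x hx. apply NNPP. intro hn.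
  assert (q : lt (r1 x) (r1 y)) by (rewrite hy; apply lt_top; auto).
  apply T1 in q. rewrite hx in q. apply (nlt_top A2 _ q).
Qed.

Lemma Count n : (forall x, r1 x = None <-> r2 (h x) = None) ->
  count_is S1 (fun x => r1 x = None) n -> count_is S2 (fun y => r2 y = None) n.
Proof.
  intros hT hc. apply (count_bij S1 S2 h hi e1 e2) in hc. revert hc. apply count_ext.
  intro y. rewrite hT, e2. tauto.
Qed.

Definition QR (a1 : A1) (a2 : A2) := exists x, r1 x = Some a1 /\ r2 (h x) = Some a2.

Lemma QR_mon a1 a2 b1 b2 : QR a1 a2 -> QR b1 b2 -> (lt a1 b1 <-> lt a2 b2).
Proof.
  intros [x [k1 k2]] [y [l1 l2]].
  change (lt (Some a1 : CC A1) (Some b1) <-> lt (Some a2 : CC A2) (Some b2)).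
  rewrite <- k1, <- k2, <- l1, <- l2. apply T1.
Qed.

Lemma QR_tot (hT : forall x, r1 x = None <-> r2 (h x) = None) a1 : exists a2, QR a1 a2.
Proof.
  destruct (G_some A1 HA1 a01 g1 gN1 a1) as [x hx].
  destruct (r2 (h x)) as [a2|] eqn:E.
  - exists a2. exists x. auto.
  - apply hT in E. congruence.
Qed.

Lemma QR_sur (hT : forall x, r1 x = None <-> r2 (h x) = None) a2 : exists a1, QR a1 a2.
Proof.
  destruct (G_some A2 HA2 a02 g2 gN2 a2) as [y hy].
  destruct (r1 (hi y)) as [a1|] eqn:E.
  - exists a1. exists (hi y). rewrite e2. auto.
  - apply hT in E. rewrite e2 in E. congruence.
Qed.

Lemma IsoA (hT : forall x, r1 x = None <-> r2 (h x) = None) : ord_iso A1 A2.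
Proof. apply (iso_of_rel A1 A2 HA1 HA2 QR); auto using QR_tot, QR_sur, QR_mon. Qed.

Lemma IsoSeg (hT : forall x, r1 x = None <-> r2 (h x) = None) b1 b2 : QR b1 b2 -> ord_iso (segment A1 b1) (segment A2 b2).
Proof.
  intro hb.
  apply (iso_of_rel (segment A1 b1) (segment A2 b2) (segment_ord _ HA1) (segment_ord _ HA2)
           (fun x y => QR (proj1_sig x) (proj1_sig y))).
  - intros [x hx]. destruct (QR_tot hT x) as [y hy].
    assert (hy' : lt y b2) by (apply (QR_mon x y b1 b2 hy hb); auto).
    exists (exist _ y hy'). auto.
  - intros [y hy]. destruct (QR_sur hT y) as [x hx].
    assert (hx' : lt x b1) by (apply (QR_mon x y b1 b2 hx hb); auto).
    exists (exist _ x hx'). auto.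
  - intros [x hx] [y hy] [x' hx'] [y' hy']. simpl. apply QR_mon.
Qed.

End TR.

Section GEN.
Set Default Proof Using "All".
Variables A1 A2 : LO.
Hypothesis HA1 : is_ordinal A1.
Hypothesis HA2 : is_ordinal A2.
Variables (a01 : A1) (a02 : A2).
Hypothesis Ha01 : forall a, le a01 a.
Hypothesis Ha02 : forall a, le a02 a.
Variables (g1 : omega_pow (CC A1)) (g2 : omega_pow (CC A2)).
Hypothesis gN1 : 1 <= ev (CC A1) g1 None.
Hypothesis gN2 : 1 <= ev (CC A2) g2 None.
Local Notation S1 := (segment (omega_pow (CC A1)) g1).
Local Notation S2 := (segment (omega_pow (CC A2)) g2).
Variables (h : S1 -> S2) (hi : S2 -> S1).
Hypothesis e1 : forall x, hi (h x) = x.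
Hypothesis e2 : forall y, h (hi y) = y.
Hypothesis ch : ord_continuous S1 S2 h.
Hypothesis chi : ord_continuous S2 S1 hi.
Local Notation r1 := (rho A1 a01 g1).
Local Notation r2 := (rho A2 a02 g2).


Let T1' := T1 A1 A2 HA1 HA2 a01 a02 Ha01 Ha02 g1 g2 gN1 gN2 h hi e1 e2 ch chi.
Let Ubnd' := Ubnd A1 A2 HA1 HA2 a01 a02 Ha01 Ha02 g1 g2 gN1 gN2 h hi e1 e2 ch chi.
Let Cpt' := Cpt A1 A2 HA1 HA2 a01 a02 Ha01 Ha02 g1 g2 gN1 gN2 h hi e1 e2 ch chi.
Let Top12' := Top12 A1 A2 HA1 HA2 a01 a02 Ha01 Ha02 g1 g2 gN1 gN2 h hi e1 e2 ch chi.
Let Top21' := Top21 A1 A2 HA1 HA2 a01 a02 Ha01 Ha02 g1 g2 gN1 gN2 h hi e1 e2 ch chi.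
Let Count' := Count A1 A2 HA1 HA2 a01 a02 Ha01 Ha02 g1 g2 gN1 gN2 h hi e1 e2 ch chi.
Let QR_mon' := QR_mon A1 A2 HA1 HA2 a01 a02 Ha01 Ha02 g1 g2 gN1 gN2 h hi e1 e2 ch chi.
Let IsoA' := IsoA A1 A2 HA1 HA2 a01 a02 Ha01 Ha02 g1 g2 gN1 gN2 h hi e1 e2 ch chi.
Let IsoSeg' := IsoSeg A1 A2 HA1 HA2 a01 a02 Ha01 Ha02 g1 g2 gN1 gN2 h hi e1 e2 ch chi.

Lemma cpt_mis : bnd_ord S1 (fun _ => True) -> ~ bnd_ord S2 (fun _ => True) -> False.
Proof. intros b nb. apply nb. apply Cpt'. auto. Qed.
Lemma cpt_mis' : ~ bnd_ord S1 (fun _ => True) -> bnd_ord S2 (fun _ => True) -> False.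
Proof. intros nb b. apply nb. apply Cpt'. auto. Qed.

Lemma top_case n1 n2 : (exists x, r1 x = None) -> (exists y, r2 y = None) ->
  count_is S1 (fun x => r1 x = None) n1 -> count_is S2 (fun y => r2 y = None) n2 ->
  n1 = n2 /\ ord_iso A1 A2.
Proof.
  intros t1 t2 c1 c2.
  assert (hT : forall x, r1 x = None <-> r2 (h x) = None).
  { intro x. split; [apply Top12'; auto|apply Top21'; auto]. }
  split.
  - apply (count_unique S2 (fun y => r2 y = None) n1 n2); [apply Count'; auto|exact c2].
  - apply IsoA'; auto.
Qed.

Lemma notop_case : (forall x, r1 x <> None) -> (forall y, r2 y <> None) -> ord_iso A1 A2.
Proof.
  intros n1 n2. apply IsoA'. intro x. split; intro e; exfalso; [apply (n1 x)|apply (n2 (h x))]; auto.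
Qed.

Lemma d12 : (forall x, r1 x <> None) -> (forall a, ~ bnd_ord S1 (fun y => @le (CC A1) (Some a) (r1 y))) ->
  (exists y, r2 y = None) -> bnd_ord S2 (fun y => @le (CC A2) None (r2 y)) -> False.
Proof.
  intros n1 u1 [y hy] b2. destruct (r1 (hi y)) as [a|] eqn:E; [|apply (n1 (hi y)); auto].
  apply (u1 a). rewrite <- E. apply Ubnd'. rewrite e2, hy. auto.
Qed.

Lemma d21 : (exists x, r1 x = None) -> bnd_ord S1 (fun y => @le (CC A1) None (r1 y)) ->
  (forall y, r2 y <> None) -> (forall a, ~ bnd_ord S2 (fun y => @le (CC A2) (Some a) (r2 y))) -> False.
Proof.
  intros [x hx] b1 n2 u2. destruct (r2 (h x)) as [a|] eqn:E; [|apply (n2 (h x)); auto].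
  apply (u2 a). rewrite <- E. apply Ubnd'. rewrite hx. auto.
Qed.

Lemma e12 b : (exists x, r1 x = None) -> (exists y, r2 y = None) ->
  (forall a, ~ bnd_ord S1 (fun y => @le (CC A1) (Some a) (r1 y))) ->
  bnd_ord S2 (fun y => @le (CC A2) (Some b) (r2 y)) -> False.
Proof.
  intros t1 t2 u1 b2. destruct (G_some A2 HA2 a02 g2 gN2 b) as [y hy].
  destruct (r1 (hi y)) as [a|] eqn:E.
  - apply (u1 a). rewrite <- E. apply Ubnd'. rewrite e2, hy. auto.
  - apply Top12' in E; auto. rewrite e2, hy in E. discriminate.
Qed.

Lemma e21 b : (exists x, r1 x = None) -> (exists y, r2 y = None) ->
  bnd_ord S1 (fun y => @le (CC A1) (Some b) (r1 y)) ->
  (forall a, ~ bnd_ord S2 (fun y => @le (CC A2) (Some a) (r2 y))) -> False.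
Proof.
  intros t1 t2 b1 u2. destruct (G_some A1 HA1 a01 g1 gN1 b) as [x hx].
  destruct (r2 (h x)) as [a|] eqn:E.
  - apply (u2 a). rewrite <- E. apply Ubnd'. rewrite hx. auto.
  - apply Top21' in E; auto. rewrite hx in E. discriminate.
Qed.

Lemma f_case b1 b2 : (exists x, r1 x = None) -> (exists y, r2 y = None) ->
  bnd_ord S1 (fun y => @le (CC A1) (Some b1) (r1 y)) ->
  (forall c, lt c (Some b1 : CC A1) -> ~ bnd_ord S1 (fun y => le c (r1 y))) ->
  bnd_ord S2 (fun y => @le (CC A2) (Some b2) (r2 y)) ->
  (forall c, lt c (Some b2 : CC A2) -> ~ bnd_ord S2 (fun y => le c (r2 y))) ->
  ord_iso (segment A1 b1) (segment A2 b2).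
Proof.
  intros t1 t2 B1 U1 B2 U2.
  assert (hT : forall x, r1 x = None <-> r2 (h x) = None).
  { intro x. split; [apply Top12'; auto|apply Top21'; auto]. }
  destruct (G_some A1 HA1 a01 g1 gN1 b1) as [x1 hx1].
  destruct (r2 (h x1)) as [c2|] eqn:E2; [|apply hT in E2; congruence].
  destruct (G_some A2 HA2 a02 g2 gN2 b2) as [y2 hy2].
  destruct (r1 (hi y2)) as [c1|] eqn:E1; [|apply hT in E1; rewrite e2 in E1; congruence].
  assert (n2 : ~ lt c2 b2).
  { intro q. apply (U2 (Some c2) q). rewrite <- E2. apply Ubnd'. rewrite hx1. auto. }
  assert (n1 : ~ lt c1 b1).
  { intro q. apply (U1 (Some c1) q). rewrite <- E1. apply Ubnd'. rewrite e2, hy2. auto. }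
  assert (q1 : QR A1 A2 a01 a02 g1 g2 h b1 c2) by (exists x1; auto).
  assert (q2 : QR A1 A2 a01 a02 g1 g2 h c1 b2) by (exists (hi y2); rewrite e2; auto).
  assert (c2 = b2).
  { destruct (o_trich HA2 c2 b2) as [q|[q|q]]; auto; [tauto|].
    exfalso. apply n1. apply (QR_mon' c1 b2 b1 c2 q2 q1). auto. }
  subst c2. apply IsoSeg'; auto.
Qed.

End GEN.

Lemma get_min (A : LO) (HA : is_ordinal A) : nonzero A -> exists a0 : A, forall a, le a0 a.
Proof.
  intros [x]. destruct (o_min HA (fun _ => True) (ex_intro _ x I)) as [a0 [_ h]].
  exists a0. intro a. apply (o_nlt_le HA). apply h; auto.
Qed.

Lemma cc0_nn (A : LO) (a0 : A) : cc0 A a0 <> None.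
Proof. unfold cc0. discriminate. Qed.
Lemma some_nn (A : LO) (b : A) : (Some b : CC A) <> None.
Proof. discriminate. Qed.

Lemma mk_homeo (X Y S1 S2 : LO) : ord_iso X S1 -> ord_iso Y S2 -> homeomorphic X Y -> homeomorphic S1 S2.
Proof.
  intros i1 i2 H. apply (homeo_trans _ X). { apply homeo_sym, iso_homeo, i1. }
  apply (homeo_trans _ Y); auto. apply iso_homeo, i2.
Qed.

Lemma fin_all n : exists l : list (fin n), NoDup l /\ length l = n /\ forall x, In x l.
Proof.
  assert (H : forall j, j <= n -> exists l : list (fin n), NoDup l /\ length l = j /\ forall x, In x l <-> proj1_sig x < j).
  { induction j as [|j IH]; intro hj.
    - exists nil. split; [constructor|split; auto]. intros x; simpl; lia.
    - assert (hj1 : j <= n) by lia. assert (hj2 : j < n) by lia.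
      destruct (IH hj1) as [l [h1 [h2 h3]]].
      exists (exist (fun i => i < n) j hj2 :: l). split; [|split].
      + constructor; auto. intro hin. apply h3 in hin. simpl in hin. lia.
      + simpl; auto.
      + intros x. simpl. rewrite h3. split.
        * intros [e|e]; [subst; simpl; lia|lia].
        * intro e. destruct (Nat.eq_dec (proj1_sig x) j) as [ej|ej].
          -- left. apply sig_eq. simpl. auto.
          -- right. lia. }
  destruct (H n (le_n n)) as [l [h1 [h2 h3]]]. exists l. split; auto. split; auto.
  intro x. apply h3. exact (proj2_sig x).
Qed.

Lemma cover_homeo (X Y : LO) : homeomorphic X Y -> (exists l : list X, forall x, In x l) -> exists l : list Y, forall y, In y l.
Proof.
  intros [f [g [gf [fg _]]]] [l hl]. exists (map f l). intro y. rewrite <- (fg y). apply in_map. auto.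
Qed.

Lemma lt_some_b (A B : LO) (HA : is_ordinal A) (a0 : A) (Ha0 : forall a, le a0 a) b :
  nonzero B -> ord_iso B (segment A b) -> lt a0 b.
Proof.
  intros [x] [f _]. destruct (f x) as [y hy]. apply (o_le_lt_trans HA (Ha0 y) hy).
Qed.

Lemma bnd4_top (A : LO) (HA : is_ordinal A) (a0 : A) k b : 1 <= k ->
  bnd_ord (segment (omega_pow (CC A)) (g4 A k b)) (fun y => @le (CC A) None (rho A a0 (g4 A k b) y)).
Proof.
  intro hk. apply (bnd_mono _ (fun y => @le (CC A) (Some b) (rho A a0 (g4 A k b) y))).
  - intros y hy. apply le_top_eq in hy. rewrite hy. left. exact I.
  - apply bnd4; auto.
Qed.

Ltac mkF2 vc A k a0 Ha0 HA hk gN iso :=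
  let nA := fresh "nA" in
  destruct vc as [hk [HA nA]]; destruct (get_min A HA nA) as [a0 Ha0];
  pose proof (gNu A k (cc0 A a0) (cc0_nn A a0) hk) as gN;
  pose proof (model2 A HA a0 Ha0 k) as iso.
Ltac mkF3 vc A k a0 Ha0 HA hk gN iso :=
  let nA := fresh "nA" in
  destruct vc as [hk [HA nA]]; destruct (get_min A HA nA) as [a0 Ha0];
  pose proof (gN3 A k hk) as gN;
  pose proof (model3 A HA k) as iso.
Ltac mkF4 vc A B k a0 Ha0 HA hk gN iso b hb hab :=
  let nA := fresh "nA" in let HB := fresh "HB" in let nB := fresh "nB" in
  destruct vc as [hk [HA [nA [HB [nB [b hb]]]]]]; destruct (get_min A HA nA) as [a0 Ha0];
  pose proof (gNu A k (Some b) (some_nn A b) hk) as gN;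
  pose proof (model4 A HA k B HB b hb) as iso;
  pose proof (lt_some_b A B HA a0 Ha0 b nB hb) as hab.

Lemma fin_count n : count_is (fin n) (fun _ => True) n.
Proof. destruct (fin_all n) as [l [h1 [h2 h3]]]. exists l. split; auto. split; auto. intro x. split; auto. Qed.

Lemma fin_cover n : exists l : list (fin n), forall x, In x l.
Proof. destruct (fin_all n) as [l [h1 [h2 h3]]]. eauto. Qed.

Lemma fin_vs_model n (X : LO) (A : LO) (a0 : A) (g : omega_pow (CC A)) (gN : 1 <= ev (CC A) g None) :
  ord_iso X (segment (omega_pow (CC A)) g) -> homeomorphic (fin n) X -> False.
Proof.
  intros iso H. apply (G_inf A a0 g gN). apply (cover_homeo X); [apply iso_homeo; auto|].
  apply (cover_homeo (fin n)); auto. apply fin_cover.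
Qed.

Theorem uniqueness (c d : code) : valid c -> valid d -> homeomorphic (space c) (space d) -> same_params c d.
Proof.
  intros vc vd H.
  destruct c as [n|k A|k A|k A B]; destruct d as [n'|k' A'|k' A'|k' A' B']; simpl in vc, vd |- *.
  - destruct H as [f [g [gf [fg _]]]].
    apply (count_unique (fin n') (fun _ => True)); [|apply fin_count].
    apply (count_bij (fin n) (fin n') f g gf fg (fun _ => True) n (fin_count n)).
  - mkF2 vd A' k' a0' Ha0' HA' hk' gN' iso'. exfalso. apply (fin_vs_model n _ A' a0' _ gN' iso' H).
  - mkF3 vd A' k' a0' Ha0' HA' hk' gN' iso'. exfalso. apply (fin_vs_model n _ A' a0' _ gN' iso' H).
  - mkF4 vd A' B' k' a0' Ha0' HA' hk' gN' iso' b' hb' hab'. exfalso. apply (fin_vs_model n _ A' a0' _ gN' iso' H).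
  - mkF2 vc A k a0 Ha0 HA hk gN iso. exfalso. apply (fin_vs_model n' _ A a0 _ gN iso (homeo_sym _ _ H)).
  - mkF2 vc A k a0 Ha0 HA hk gN iso. mkF2 vd A' k' a0' Ha0' HA' hk' gN' iso'.
    destruct (mk_homeo _ _ _ _ iso iso' H) as [h [hi [e1 [e2 [ch chi]]]]].
    destruct (top_case A A' HA HA' a0 a0' Ha0 Ha0' _ _ gN gN' h hi e1 e2 ch chi k k').
    + apply topex; auto. apply cnt_upd; auto. apply cc0_nn.
    + apply topex; auto. apply cnt_upd; auto. apply cc0_nn.
    + apply G_count; auto. intros j hj. apply cnt_upd; auto. apply cc0_nn.
    + apply G_count; auto. intros j hj. apply cnt_upd; auto. apply cc0_nn.
    + auto.
  - mkF2 vc A k a0 Ha0 HA hk gN iso. mkF3 vd A' k' a0' Ha0' HA' hk' gN' iso'.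
    destruct (mk_homeo _ _ _ _ iso iso' H) as [h [hi [e1 [e2 [ch chi]]]]].
    exfalso. apply (cpt_mis A A' HA HA' a0 a0' Ha0 Ha0' _ _ gN gN' h hi e1 e2 ch chi).
    + apply (cpt2 A HA a0 Ha0 k hk).
    + apply (ncpt3 A' HA' a0' k').
  - mkF2 vc A k a0 Ha0 HA hk gN iso. mkF4 vd A' B' k' a0' Ha0' HA' hk' gN' iso' b' hb' hab'.
    destruct (mk_homeo _ _ _ _ iso iso' H) as [h [hi [e1 [e2 [ch chi]]]]].
    exfalso. apply (cpt_mis A A' HA HA' a0 a0' Ha0 Ha0' _ _ gN gN' h hi e1 e2 ch chi).
    + apply (cpt2 A HA a0 Ha0 k hk).
    + apply (ncpt4 A' HA' a0' k' b' hab').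
  - mkF3 vc A k a0 Ha0 HA hk gN iso. exfalso. apply (fin_vs_model n' _ A a0 _ gN iso (homeo_sym _ _ H)).
  - mkF3 vc A k a0 Ha0 HA hk gN iso. mkF2 vd A' k' a0' Ha0' HA' hk' gN' iso'.
    destruct (mk_homeo _ _ _ _ iso iso' H) as [h [hi [e1 [e2 [ch chi]]]]].
    exfalso. apply (cpt_mis' A A' HA HA' a0 a0' Ha0 Ha0' _ _ gN gN' h hi e1 e2 ch chi).
    + apply (ncpt3 A HA a0 k).
    + apply (cpt2 A' HA' a0' Ha0' k' hk').
  - mkF3 vc A k a0 Ha0 HA hk gN iso. mkF3 vd A' k' a0' Ha0' HA' hk' gN' iso'.
    destruct (mk_homeo _ _ _ _ iso iso' H) as [h [hi [e1 [e2 [ch chi]]]]].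
    destruct (Nat.eq_dec k 1) as [E|E]; destruct (Nat.eq_dec k' 1) as [E'|E'].
    + subst k k'. split; auto.
      apply (notop_case A A' HA HA' a0 a0' Ha0 Ha0' _ _ gN gN' h hi e1 e2 ch chi).
      * apply notop3; auto.
      * apply notop3; auto.
    + subst k. exfalso. apply (d12 A A' HA HA' a0 a0' Ha0 Ha0' _ _ gN gN' h hi e1 e2 ch chi).
      * apply notop3; auto.
      * apply unb3; auto.
      * apply topex; auto. apply cnt_ee; auto. lia.
      * apply bnd3; auto.
    + subst k'. exfalso. apply (d21 A A' HA HA' a0 a0' Ha0 Ha0' _ _ gN gN' h hi e1 e2 ch chi).
      * apply topex; auto. apply cnt_ee; auto. lia.
      * apply bnd3; auto.
      * apply notop3; auto.
      * apply unb3; auto.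
    + destruct (top_case A A' HA HA' a0 a0' Ha0 Ha0' _ _ gN gN' h hi e1 e2 ch chi (k - 1) (k' - 1)).
      * apply topex; auto. apply cnt_ee; auto. lia.
      * apply topex; auto. apply cnt_ee; auto. lia.
      * apply G_count; auto. intros j hj. apply cnt_ee; auto.
      * apply G_count; auto. intros j hj. apply cnt_ee; auto.
      * split; auto. lia.
  - mkF3 vc A k a0 Ha0 HA hk gN iso. mkF4 vd A' B' k' a0' Ha0' HA' hk' gN' iso' b' hb' hab'.
    destruct (mk_homeo _ _ _ _ iso iso' H) as [h [hi [e1 [e2 [ch chi]]]]].
    exfalso. destruct (Nat.eq_dec k 1) as [E|E].
    + subst k. apply (d12 A A' HA HA' a0 a0' Ha0 Ha0' _ _ gN gN' h hi e1 e2 ch chi).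
      * apply notop3; auto.
      * apply unb3; auto.
      * apply topex; auto. apply cnt_upd; auto. apply some_nn.
      * apply bnd4_top; auto.
    + apply (e12 A A' HA HA' a0 a0' Ha0 Ha0' _ _ gN gN' h hi e1 e2 ch chi b').
      * apply topex; auto. apply cnt_ee; auto. lia.
      * apply topex; auto. apply cnt_upd; auto. apply some_nn.
      * apply unb3; auto.
      * apply bnd4; auto.
  - mkF4 vc A B k a0 Ha0 HA hk gN iso b hb hab. exfalso. apply (fin_vs_model n' _ A a0 _ gN iso (homeo_sym _ _ H)).
  - mkF4 vc A B k a0 Ha0 HA hk gN iso b hb hab. mkF2 vd A' k' a0' Ha0' HA' hk' gN' iso'.
    destruct (mk_homeo _ _ _ _ iso iso' H) as [h [hi [e1 [e2 [ch chi]]]]].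
    exfalso. apply (cpt_mis' A A' HA HA' a0 a0' Ha0 Ha0' _ _ gN gN' h hi e1 e2 ch chi).
    + apply (ncpt4 A HA a0 k b hab).
    + apply (cpt2 A' HA' a0' Ha0' k' hk').
  - mkF4 vc A B k a0 Ha0 HA hk gN iso b hb hab. mkF3 vd A' k' a0' Ha0' HA' hk' gN' iso'.
    destruct (mk_homeo _ _ _ _ iso iso' H) as [h [hi [e1 [e2 [ch chi]]]]].
    exfalso. destruct (Nat.eq_dec k' 1) as [E|E].
    + subst k'. apply (d21 A A' HA HA' a0 a0' Ha0 Ha0' _ _ gN gN' h hi e1 e2 ch chi).
      * apply topex; auto. apply cnt_upd; auto. apply some_nn.
      * apply bnd4_top; auto.
      * apply notop3; auto.
      * apply unb3; auto.
    + apply (e21 A A' HA HA' a0 a0' Ha0 Ha0' _ _ gN gN' h hi e1 e2 ch chi b).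
      * apply topex; auto. apply cnt_upd; auto. apply some_nn.
      * apply topex; auto. apply cnt_ee; auto. lia.
      * apply bnd4; auto.
      * apply unb3; auto.
  - mkF4 vc A B k a0 Ha0 HA hk gN iso b hb hab. mkF4 vd A' B' k' a0' Ha0' HA' hk' gN' iso' b' hb' hab'.
    destruct (mk_homeo _ _ _ _ iso iso' H) as [h [hi [e1 [e2 [ch chi]]]]].
    destruct (top_case A A' HA HA' a0 a0' Ha0 Ha0' _ _ gN gN' h hi e1 e2 ch chi k k') as [ek isoA].
    + apply topex; auto. apply cnt_upd; auto. apply some_nn.
    + apply topex; auto. apply cnt_upd; auto. apply some_nn.
    + apply G_count; auto. intros j hj. apply cnt_upd; auto. apply some_nn.
    + apply G_count; auto. intros j hj. apply cnt_upd; auto. apply some_nn.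
    + split; [auto|split; [auto|]].
      assert (hs : ord_iso (segment A b) (segment A' b')).
      { apply (f_case A A' HA HA' a0 a0' Ha0 Ha0' _ _ gN gN' h hi e1 e2 ch chi b b').
        - apply topex; auto. apply cnt_upd; auto. apply some_nn.
        - apply topex; auto. apply cnt_upd; auto. apply some_nn.
        - apply bnd4; auto.
        - intros c hc. apply unb4; auto.
        - apply bnd4; auto.
        - intros c hc. apply unb4; auto. }
      apply (iso_trans hb). apply (iso_trans hs). apply iso_sym. auto.
Qed.

Theorem theorem27 :
  (forall G : LO, is_ordinal G ->
     exists c : code, valid c /\ homeomorphic G (space c)) /\
  (forall c d : code, valid c -> valid d ->
     homeomorphic (space c) (space d) -> same_params c d).
Proof.
  split.
  - exact existence.
  - exact uniqueness.
Qed.
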